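(* For every $\varepsilon>0$ there exists $n_0$ such that for all $n\ge n_0$, $$\frac{\sqrt[3]{6\ln 2}-\varepsilon}{n^{4/3}}\le p_1^*(n)\le\frac{\sqrt[3]{6\ln 2}+\varepsilon}{n^{4/3}}.$$
   Context: $G(n,p)$ is the Erdős–Rényi random graph on $n$ labelled vertices in which each of the $\binom n2$ possible edges is present independently with probability $p$; $\mathbb{P}_{n,p}$ is the corresponding probability. A distance graph in $\mathbb{R}^d$ is a finite graph $(V,E)$ with $V\subset\mathbb{R}^d$ finite and $E\subseteq\{\{\mathbf{x},\mathbf{y}\}\subseteq V: |\mathbf{x}-\mathbf{y}|=1\}$ (Euclidean norm). A graph is realizable in $\mathbb{R}^d$ as a distance graph if it is isomorphic to some distance graph in $\mathbb{R}^d$. For $d\ge1$, $p_d^*(n)=\sup\{p\in[0,1]:\ \mathbb{P}_{n,p}(G \text{ is realizable in } \mathbb{R}^d \text{ as a distance graph})>\tfrac12\}$. *)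

(* Defs.v *)
From Stdlib Require Import Reals List Arith ClassicalEpsilon.
Import ListNotations.
Open Scope R_scope.

(* Vertices of G(n,p) are 0,...,n-1.  The potential edges are the pairs
   (i,j) with i < j < n; there are binom(n,2) of them. *)
Definition pairs (n : nat) : list (nat * nat) :=
  flat_map (fun j => map (fun i => (i, j)) (seq 0 j)) (seq 0 n).

Fixpoint sublists {A : Type} (l : list A) : list (list A) :=
  match l with
  | [] => [[]]
  | x :: l' => let r := sublists l' in r ++ map (cons x) r
  end.

(* The graph on vertex set {0,..,n-1} with edge set S is realizable in R^d
   as a distance graph: there is an injective placement of the vertices in
   R^d (here d = 1, so R with the Euclidean norm |.|) such that every edge
   joins two points at distance exactly 1. *)
Definition realizable_R1 (n : nat) (S : list (nat * nat)) : Prop :=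
  exists f : nat -> R,
    (forall i j : nat, (i < n)%nat -> (j < n)%nat -> f i = f j -> i = j) /\
    (forall e, In e S -> Rabs (f (fst e) - f (snd e)) = 1).

(* P_{n,p}(G realizable in R^1): sum over all edge sets S of the weight
   p^|S| (1-p)^(binom(n,2) - |S|) of those S that are realizable. *)
Definition prob_realizable (n : nat) (p : R) : R :=
  let E := pairs n in
  fold_right Rplus 0
    (map (fun S =>
            if excluded_middle_informative (realizable_R1 n S)
            then p ^ length S * (1 - p) ^ (length E - length S)
            else 0)
         (sublists E)).

(* The set whose supremum is p_1^*(n). *)
Definition pstar_set (n : nat) (p : R) : Prop :=
  0 <= p <= 1 /\ prob_realizable n p > 1 / 2.

(* Main.v *)
Require Import Defs.
From Stdlib Require Import Reals Lra Lia Psatz List Arith ClassicalEpsilon Classical ZArith.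
Import ListNotations.

Open Scope R_scope.

Fixpoint mu {E : Type} (p : R) (l : list E) (A : list E -> Prop) : R :=
  match l with
  | [] => if excluded_middle_informative (A []) then 1 else 0
  | x :: l' => (1-p) * mu p l' A + p * mu p l' (fun S => A (x :: S))
  end.

Lemma mu_ext_in {E} p (l : list E) : forall A B,
  (forall S, incl S l -> (A S <-> B S)) -> mu p l A = mu p l B.
Proof.
  induction l as [|x l IH]; intros A B H; simpl.
  - destruct (excluded_middle_informative (A [])) as [a|a];
    destruct (excluded_middle_informative (B [])) as [b|b]; auto;
    exfalso; [apply b; apply H | apply a; apply H]; auto; intros z Hz; inversion Hz.
  - rewrite (IH A B), (IH (fun S => A (x::S)) (fun S => B (x::S))); auto.
    + intros S HS; apply H. intros z [->|Hz]; [left; auto| right; auto].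
    + intros S HS; apply H. intros z Hz; right; auto.
Qed.

Lemma mu_ext {E} p (l : list E) A B : (forall S, A S <-> B S) -> mu p l A = mu p l B.
Proof. intros H; apply mu_ext_in; auto. Qed.

Lemma mu_false {E} p (l : list E) A : (forall S, incl S l -> ~ A S) -> mu p l A = 0.
Proof.
  intros H. induction l as [|x l IH] in A, H |- *; simpl.
  - destruct (excluded_middle_informative (A [])) as [a|a]; auto.
    exfalso; apply (H []); auto. intros z Hz; inversion Hz.
  - rewrite (IH A), (IH (fun S => A (x::S))). ring.
    + intros S HS; apply H. intros z [->|Hz]; [left; auto| right; auto].
    + intros S HS; apply H. intros z Hz; right; auto.
Qed.

Lemma mu_true {E} p (l : list E) A : (forall S, A S) -> mu p l A = 1.
Proof.
  intros H. induction l as [|x l IH] in A, H |- *; simpl.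
  - destruct (excluded_middle_informative (A [])) as [a|a]; auto. exfalso; auto.
  - rewrite (IH A), (IH (fun S => A (x::S))); auto. ring.
Qed.

Lemma mu_bounds {E} p (l : list E) A : 0 <= p <= 1 -> 0 <= mu p l A <= 1.
Proof.
  intros Hp. induction l as [|x l IH] in A |- *; simpl.
  - destruct (excluded_middle_informative (A [])); lra.
  - destruct (IH A), (IH (fun S => A (x::S))). nra.
Qed.

Lemma mu_split {E} p (l : list E) A B :
  mu p l A = mu p l (fun S => A S /\ B S) + mu p l (fun S => A S /\ ~ B S).
Proof.
  induction l as [|x l IH] in A, B |- *; simpl.
  - destruct (excluded_middle_informative (A [])) as [a|a];
    destruct (excluded_middle_informative (A [] /\ B [])) as [b|b];
    destruct (excluded_middle_informative (A [] /\ ~ B [])) as [c|c]; try lra;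
    tauto.
  - rewrite (IH A B), (IH (fun S => A (x::S)) (fun S => B (x::S))). ring.
Qed.

Lemma mu_compl {E} p (l : list E) A : mu p l A + mu p l (fun S => ~ A S) = 1.
Proof.
  rewrite <- (mu_true p l (fun _ => True)) by auto.
  rewrite (mu_split p l (fun _ => True) A).
  f_equal; apply mu_ext; tauto.
Qed.

Lemma mu_mono {E} p (l : list E) A B : 0 <= p <= 1 ->
  (forall S, A S -> B S) -> mu p l A <= mu p l B.
Proof.
  intros Hp H. rewrite (mu_split p l B A).
  rewrite (mu_ext p l (fun S => B S /\ A S) A) by (intros S; split; [tauto| intros; split; auto]).
  pose proof (mu_bounds p l (fun S => B S /\ ~ A S) Hp). lra.
Qed.

Lemma mu_union {E} p (l : list E) A B : 0 <= p <= 1 ->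
  mu p l (fun S => A S \/ B S) <= mu p l A + mu p l B.
Proof.
  intros Hp. rewrite (mu_split p l _ A).
  assert (mu p l (fun S => (A S \/ B S) /\ A S) <= mu p l A) by (apply mu_mono; tauto).
  assert (mu p l (fun S => (A S \/ B S) /\ ~ A S) <= mu p l B) by (apply mu_mono; tauto).
  lra.
Qed.

Definition decr {E} (A : list E -> Prop) := forall S T, incl S T -> A T -> A S.
Definition incr {E} (A : list E -> Prop) := forall S T, incl S T -> A S -> A T.

Lemma decr_cons {E} (A : list E -> Prop) x : decr A -> decr (fun S => A (x::S)).
Proof. intros H S T HST; apply H. intros z [->|Hz]; [left|right; auto]; auto. Qed.
Lemma incr_cons {E} (A : list E -> Prop) x : incr A -> incr (fun S => A (x::S)).
Proof. intros H S T HST; apply H. intros z [->|Hz]; [left|right; auto]; auto. Qed.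

Lemma decr_step {E} p (l : list E) A x : 0 <= p <= 1 -> decr A ->
  mu p l (fun S => A (x::S)) <= mu p l A.
Proof. intros Hp H; apply mu_mono; auto. intros S; apply H. intros z Hz; right; auto. Qed.

Lemma harris {E} p (l : list E) A B : 0 <= p <= 1 -> decr A -> decr B ->
  mu p l A * mu p l B <= mu p l (fun S => A S /\ B S).
Proof.
  intros Hp. induction l as [|x l IH] in A, B |- *; intros HA HB; simpl.
  - destruct (excluded_middle_informative (A [])) as [a|a];
    destruct (excluded_middle_informative (B [])) as [b|b];
    destruct (excluded_middle_informative (A [] /\ B [])) as [c|c]; try lra; tauto.
  - pose proof (IH A B HA HB). pose proof (IH _ _ (decr_cons A x HA) (decr_cons B x HB)).
    pose proof (decr_step p l A x Hp HA). pose proof (decr_step p l B x Hp HB).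
    pose proof (mu_bounds p l A Hp). pose proof (mu_bounds p l B Hp).
    pose proof (mu_bounds p l (fun S => A (x::S)) Hp). pose proof (mu_bounds p l (fun S => B (x::S)) Hp).
    set (a0 := mu p l A) in *. set (b0 := mu p l B) in *.
    set (a1 := mu p l (fun S => A (x::S))) in *. set (b1 := mu p l (fun S => B (x::S))) in *.
    assert (p*(1-p)*((a0-a1)*(b0-b1)) >= 0).
    { apply Rle_ge. apply Rmult_le_pos. nra. nra. }
    nra.
Qed.

Lemma harris_id {E} p (l : list E) A B : 0 <= p <= 1 -> incr A -> decr B ->
  mu p l (fun S => A S /\ B S) <= mu p l A * mu p l B.
Proof.
  intros Hp HA HB.
  assert (HnA : decr (fun S => ~ A S)) by (intros S T H1 H2 H3; apply H2; eapply HA; eauto).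
  pose proof (harris p l _ _ Hp HnA HB) as H; cbv beta in H.
  pose proof (mu_compl p l A) as Hc.
  pose proof (mu_split p l B A) as Hs.
  rewrite (mu_ext p l (fun S => B S /\ A S) (fun S => A S /\ B S)) in Hs by tauto.
  rewrite (mu_ext p l (fun S => ~ A S /\ B S) (fun S => B S /\ ~ A S)) in H by tauto.
  set (x := mu p l (fun S => A S /\ B S)) in *.
  set (y := mu p l (fun S => B S /\ ~ A S)) in *.
  set (a := mu p l A) in *. set (na := mu p l (fun S => ~ A S)) in *. set (b := mu p l B) in *.
  assert (na = 1 - a) by lra. subst na. nra.
Qed.

Lemma mu_mono_p {E} (l : list E) A p q : 0 <= p -> p <= q -> q <= 1 -> decr A ->
  mu q l A <= mu p l A.
Proof.
  intros H1 H2 H3. induction l as [|x l IH] in A |- *; intros HA; simpl.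
  - lra.
  - pose proof (IH A HA). pose proof (IH _ (decr_cons A x HA)).
    pose proof (decr_step p l A x ltac:(lra) HA).
    pose proof (mu_bounds q l A ltac:(lra)). pose proof (mu_bounds q l (fun S => A (x::S)) ltac:(lra)).
    nra.
Qed.

Definition depon {E} (P : E -> Prop) (A : list E -> Prop) :=
  forall S T, (forall e, P e -> (In e S <-> In e T)) -> (A S <-> A T).

Lemma depon_cons {E} P (A : list E -> Prop) x : depon P A -> depon P (fun S => A (x::S)).
Proof.
  intros H S T HST; apply H. intros e He; simpl. specialize (HST e He). tauto.
Qed.

Lemma depon_indep_x {E} P (A : list E -> Prop) x : depon P A -> ~ P x ->
  forall S, A (x::S) <-> A S.
Proof.
  intros H Hx S; apply H. intros e He; simpl. split; [intros [->|?]; [contradiction|auto]|auto].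
Qed.

Lemma indep {E} p (l : list E) P A B :
  depon P A -> depon (fun e => ~ P e) B ->
  mu p l (fun S => A S /\ B S) = mu p l A * mu p l B.
Proof.
  induction l as [|x l IH] in A, B |- *; intros HA HB; simpl.
  - destruct (excluded_middle_informative (A [])) as [a|a];
    destruct (excluded_middle_informative (B [])) as [b|b];
    destruct (excluded_middle_informative (A [] /\ B [])) as [c|c]; try lra; tauto.
  - rewrite IH by auto. rewrite (IH (fun S => A (x::S)) (fun S => B (x::S))) by (apply depon_cons; auto).
    destruct (classic (P x)) as [Px|Px].
    + rewrite (mu_ext p l (fun S => B (x::S)) B).
      2:{ apply (depon_indep_x (fun e => ~ P e)); auto. }
      ring.
    + rewrite (mu_ext p l (fun S => A (x::S)) A) by (apply (depon_indep_x P); auto).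
      ring.
Qed.

Open Scope R_scope.

Fixpoint rsum {A} (f : A -> R) (L : list A) : R :=
  match L with [] => 0 | a :: L' => f a + rsum f L' end.
Fixpoint rprod {A} (f : A -> R) (L : list A) : R :=
  match L with [] => 1 | a :: L' => f a * rprod f L' end.

Lemma rsum_app {A} f (L1 L2 : list A) : rsum f (L1 ++ L2) = rsum f L1 + rsum f L2.
Proof. induction L1; simpl; [ring| rewrite IHL1; ring]. Qed.
Lemma rsum_le {A} f g (L : list A) : (forall a, In a L -> f a <= g a) -> rsum f L <= rsum g L.
Proof. induction L; simpl; intros H; [lra|]. pose proof (H a (or_introl eq_refl)).
  assert (rsum f L <= rsum g L) by (apply IHL; auto). lra. Qed.
Lemma rsum_nonneg {A} f (L : list A) : (forall a, In a L -> 0 <= f a) -> 0 <= rsum f L.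
Proof. induction L; simpl; intros H; [lra|]. pose proof (H a (or_introl eq_refl)).
  assert (0 <= rsum f L) by (apply IHL; auto). lra. Qed.
Lemma rsum_const {A} c (L : list A) : rsum (fun _ => c) L = INR (length L) * c.
Proof. induction L; simpl length; [simpl; ring|]. rewrite S_INR; simpl; rewrite IHL; ring. Qed.
Lemma rsum_plus {A} f g (L : list A) : rsum (fun a => f a + g a) L = rsum f L + rsum g L.
Proof. induction L; simpl; [ring| rewrite IHL; ring]. Qed.
Lemma rsum_scal {A} c f (L : list A) : rsum (fun a => c * f a) L = c * rsum f L.
Proof. induction L; simpl; [ring| rewrite IHL; ring]. Qed.
Lemma rsum_ext {A} f g (L : list A) : (forall a, In a L -> f a = g a) -> rsum f L = rsum g L.
Proof. induction L; simpl; intros H; [auto|]. rewrite H by auto. rewrite IHL; auto. Qed.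
Lemma rsum_map {A B} (f : B -> R) (g : A -> B) L : rsum f (map g L) = rsum (fun a => f (g a)) L.
Proof. induction L; simpl; [auto| rewrite IHL; auto]. Qed.
Lemma rsum_flat_map {A B} (f : B -> R) (g : A -> list B) L :
  rsum f (flat_map g L) = rsum (fun a => rsum f (g a)) L.
Proof. induction L; simpl; [auto| rewrite rsum_app, IHL; auto]. Qed.

Lemma rsum_incl {A} f (L1 L2 : list A) : NoDup L1 -> incl L1 L2 ->
  (forall a, In a L2 -> 0 <= f a) -> rsum f L1 <= rsum f L2.
Proof.
  induction L1 as [|x L1 IH] in L2 |- *; intros ND Hi Hf; simpl.
  - apply rsum_nonneg; auto.
  - inversion ND; subst.
    destruct (in_split x L2 (Hi x (or_introl eq_refl))) as (P1 & P2 & ->).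
    rewrite rsum_app; simpl.
    assert (rsum f L1 <= rsum f (P1 ++ P2)).
    { apply IH; auto.
      - intros z Hz. assert (In z (P1 ++ x :: P2)) by (apply Hi; right; auto).
        apply in_app_or in H. apply in_or_app. destruct H as [H|[H|H]]; auto. subst; contradiction.
      - intros a Ha; apply Hf. apply in_app_or in Ha; apply in_or_app; destruct Ha; simpl; auto. }
    rewrite rsum_app in H. lra.
Qed.

Lemma mu_incl {E} p (l : list E) : forall F, 0 <= p <= 1 -> NoDup l -> NoDup F -> incl F l ->
  mu p l (fun S => incl F S) = p ^ length F.
Proof.
  induction l as [|x l IH]; intros F Hp Hl HF Hi; simpl.
  - destruct F as [|y F]. 
    + destruct (excluded_middle_informative (incl [] [])); simpl; auto. exfalso; apply n; intros z Hz; inversion Hz.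
    + exfalso. apply (Hi y); left; auto.
  - inversion Hl; subst.
    destruct (classic (In x F)) as [Hx|Hx].
    + destruct (in_split x F Hx) as (P1 & P2 & ->).
      rewrite (mu_false p l (fun S => incl (P1 ++ x :: P2) S)).
      2:{ intros S HS Hc. apply H1. apply HS, Hc. apply in_or_app; right; left; auto. }
      rewrite (mu_ext_in p l _ (fun S => incl (P1 ++ P2) S)).
      2:{ intros S HS. split; intros H z Hz.
          - assert (In z (x :: S)) as [->|?] by (apply H; apply in_app_or in Hz; apply in_or_app; destruct Hz; simpl; auto); auto.
            exfalso; apply (NoDup_remove_2 _ _ _ HF); auto.
          - apply in_app_or in Hz. destruct Hz as [Hz|[Hz|Hz]]; [right|left; auto|right]; apply H; apply in_or_app; auto. }
      rewrite IH; auto.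
      * rewrite !length_app; simpl. rewrite Nat.add_succ_r. simpl. ring.
      * eapply NoDup_remove_1; eauto.
      * intros z Hz. assert (In z (x :: l)) as [->|?]; auto.
        { apply Hi; apply in_app_or in Hz; apply in_or_app; destruct Hz; simpl; auto. }
        exfalso; apply (NoDup_remove_2 _ _ _ HF); auto.
    + rewrite (mu_ext p l (fun S => incl F (x :: S)) (fun S => incl F S)).
      2:{ intros S; split; intros H z Hz; [| right; auto]. destruct (H z Hz); subst; auto; contradiction. }
      rewrite IH; auto. ring.
      intros z Hz. destruct (Hi z Hz); subst; auto; contradiction.
Qed.

Lemma mu_const_and {E} p (l : list E) (P : Prop) A :
  mu p l (fun S => P /\ A S) = if excluded_middle_informative P then mu p l A else 0.
Proof.
  destruct (excluded_middle_informative P) as [H|H].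
  - apply mu_ext; tauto.
  - apply mu_false; tauto.
Qed.

Lemma union_bound {E T} p (l : list E) (B : T -> list E -> Prop) (I : list T) : 0 <= p <= 1 ->
  mu p l (fun S => exists t, In t I /\ B t S) <= rsum (fun t => mu p l (B t)) I.
Proof.
  intros Hp. induction I as [|t I IH]; simpl.
  - rewrite mu_false; [lra|]. intros S _ [t [[] _]].
  - eapply Rle_trans; [|apply Rplus_le_compat_l, IH].
    eapply Rle_trans; [|apply mu_union; auto].
    apply mu_mono; auto. intros S [u [[<-|Hu] Hb]]; [left; auto| right; eauto].
Qed.

Lemma prod_bound {E T} p (l : list E) (B : T -> list E -> Prop) (I : list T) : 0 <= p <= 1 ->
  (forall t, incr (B t)) ->
  rprod (fun t => 1 - mu p l (B t)) I <= mu p l (fun S => forall t, In t I -> ~ B t S).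
Proof.
  intros Hp HB. induction I as [|t I IH]; simpl.
  - rewrite mu_true; [lra|]. intros S t [].
  - pose proof (mu_compl p l (B t)).
    assert (decr (fun S => ~ B t S)) by (intros S T0 H1 H2 H3; apply H2; eapply HB; eauto).
    assert (decr (fun S => forall u, In u I -> ~ B u S)) by
      (intros S T0 H1 H2 u Hu H3; apply (H2 u Hu); eapply HB; eauto).
    pose proof (harris p l _ _ Hp H0 H1).
    assert (0 <= 1 - mu p l (B t)) by (pose proof (mu_bounds p l (B t) Hp); lra).
    eapply Rle_trans; [apply Rmult_le_compat_l; [auto| apply IH]|].
    replace (1 - mu p l (B t)) with (mu p l (fun S => ~ B t S)) by lra.
    eapply Rle_trans; [apply H2|]. apply Req_le, mu_ext. intros S; split.
    + intros [h1 h2] u [<-|Hu]; auto.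
    + intros h; split; auto.
Qed.

Definition share {E T} (F : T -> list E) t u := exists e, In e (F t) /\ In e (F u).

Definition dsum {E T} p (l : list E) (F : T -> list E) t (I : list T) :=
  rsum (fun u => if excluded_middle_informative (share F t u)
                 then mu p l (fun S => incl (F t) S /\ incl (F u) S) else 0) I.

Fixpoint jsum {E T} p (l : list E) (F : T -> list E) (I : list T) : R :=
  match I with
  | [] => 0
  | t :: I' => - mu p l (fun S => incl (F t) S) + dsum p l F t I' + jsum p l F I'
  end.

Lemma janson {E T} p (l : list E) (F : T -> list E) (I : list T) : 0 <= p <= 1 ->
  mu p l (fun S => forall t, In t I -> ~ incl (F t) S) <= exp (jsum p l F I).
Proof.
  intros Hp. induction I as [|t I IH]; simpl.
  - rewrite mu_true; [rewrite exp_0; lra|]. intros S t [].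
  - set (C := fun S => forall u, In u I -> ~ incl (F u) S) in *.
    set (Bt := fun S => incl (F t) S).
    set (noE := fun S => forall u, In u I -> ~ share F t u -> ~ incl (F u) S).
    set (noD := fun S => forall u, In u I -> share F t u -> ~ incl (F u) S).
    assert (HC : forall S, C S <-> noE S /\ noD S).
    { intros S; unfold C, noE, noD; split.
      - intros H; split; intros u Hu _; apply H; auto.
      - intros [H1 H2] u Hu. destruct (classic (share F t u)); [apply H2|apply H1]; auto. }
    assert (Hdec : decr noE).
    { intros S T0 HST H u Hu Hs Hi. apply (H u Hu Hs). intros z Hz; apply HST, Hi, Hz. }
    assert (Hinc : forall u, incr (fun S => Bt S /\ incl (F u) S)).
    { intros u S T0 HST [H1 H2]; split; intros z Hz; apply HST; [apply H1|apply H2]; auto. }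
    assert (Hind : mu p l (fun S => Bt S /\ noE S) = mu p l Bt * mu p l noE).
    { apply (indep p l (fun e => In e (F t))).
      - intros S T0 H; unfold Bt; split; intros Hi z Hz; apply H; auto.
      - intros S T0 H; unfold noE; split; intros Hi u Hu Hs Hc; apply (Hi u Hu Hs);
        intros z Hz; apply H; [intros Hz'; apply Hs; exists z; auto| |intros Hz'; apply Hs; exists z; auto|]; auto. }
    assert (HU : mu p l (fun S => Bt S /\ noE S /\ ~ noD S) <=
                 rsum (fun u => if excluded_middle_informative (share F t u)
                   then mu p l (fun S => Bt S /\ incl (F u) S) * mu p l noE else 0) I).
    { eapply Rle_trans.
      2:{ apply rsum_le. intros u Hu.
          instantiate (1 := fun u => mu p l (fun S => share F t u /\ ((Bt S /\ incl (F u) S) /\ noE S))).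
          simpl. rewrite mu_const_and.
          destruct (excluded_middle_informative (share F t u)); [|lra].
          apply harris_id; auto. }
      eapply Rle_trans; [|apply union_bound; auto].
      apply mu_mono; auto. intros S [h1 [h2 h3]].
      apply NNPP; intros Hn; apply h3. intros u Hu Hs Hi. apply Hn. exists u; repeat split; auto. }
    assert (Hsplit := mu_split p l (fun S => Bt S /\ noE S) noD).
    assert (HBC : mu p l (fun S => Bt S /\ C S) = mu p l (fun S => (Bt S /\ noE S) /\ noD S)).
    { apply mu_ext; intros S; rewrite HC; tauto. }
    assert (HU' : mu p l (fun S => (Bt S /\ noE S) /\ ~ noD S) =
                  mu p l (fun S => Bt S /\ noE S /\ ~ noD S)) by (apply mu_ext; tauto).
    assert (HdsE : rsum (fun u => if excluded_middle_informative (share F t u)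
                   then mu p l (fun S => Bt S /\ incl (F u) S) * mu p l noE else 0) I
                   = dsum p l F t I * mu p l noE).
    { unfold dsum. rewrite Rmult_comm, <- rsum_scal. apply rsum_ext. intros u _.
      destruct (excluded_middle_informative (share F t u)); unfold Bt; ring. }
    assert (HCE : mu p l C <= mu p l noE) by (apply mu_mono; auto; intros S HS; apply HC; auto).
    assert (Hcur : mu p l (fun S => Bt S /\ C S) >= mu p l C * (mu p l Bt - dsum p l F t I)).
    { pose proof (mu_bounds p l C Hp). pose proof (mu_bounds p l (fun S => Bt S /\ C S) Hp).
      destruct (Rle_dec 0 (mu p l Bt - dsum p l F t I)).
      - nra.
      - nra. }
    assert (Hnew : mu p l (fun S => forall u, In u (t :: I) -> ~ incl (F u) S) =
                   mu p l C - mu p l (fun S => Bt S /\ C S)).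
    { rewrite (mu_split p l C Bt).
      rewrite (mu_ext p l (fun S => C S /\ Bt S) (fun S => Bt S /\ C S)) by tauto.
      assert (mu p l (fun S => forall u, In u (t :: I) -> ~ incl (F u) S) = mu p l (fun S => C S /\ ~ Bt S)).
      { apply mu_ext. intros S; unfold C, Bt; simpl; split.
        - intros H; split; [intros u Hu; apply H; auto| apply H; auto].
        - intros [H1 H2] u [<-|Hu]; auto. }
      lra. }
    simpl in Hnew. rewrite Hnew.
    rewrite exp_plus, exp_plus.
    pose proof (exp_ineq1_le (- mu p l Bt + dsum p l F t I)).
    pose proof (mu_bounds p l C Hp). pose proof (mu_bounds p l Bt Hp).
    assert (0 <= dsum p l F t I).
    { apply rsum_nonneg; intros u _. destruct (excluded_middle_informative (share F t u)); [apply mu_bounds; auto| lra]. }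
    pose proof (exp_pos (jsum p l F I)).
    fold Bt.
    assert (mu p l C * (1 + (- mu p l Bt + dsum p l F t I)) <= exp (jsum p l F I) * exp (- mu p l Bt + dsum p l F t I)).
    { apply Rmult_le_compat; try lra. }
    rewrite exp_plus in H4. nra.
Qed.

Open Scope R_scope.

Lemma sublists_length {A} (l : list A) : forall S, In S (sublists l) -> (length S <= length l)%nat.
Proof.
  induction l as [|x l IH]; simpl; intros S H.
  - destruct H as [<-|[]]; simpl; lia.
  - apply in_app_or in H. destruct H as [H|H].
    + specialize (IH S H); lia.
    + apply in_map_iff in H. destruct H as [S' [<- H]]. specialize (IH S' H); simpl; lia.
Qed.

Lemma fold_sum_app (L1 L2 : list R) : fold_right Rplus 0 (L1 ++ L2) = fold_right Rplus 0 L1 + fold_right Rplus 0 L2.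
Proof. induction L1; simpl; [ring| rewrite IHL1; ring]. Qed.

Lemma fold_sum_rsum {A} (f : A -> R) L : fold_right Rplus 0 (map f L) = rsum f L.
Proof. induction L; simpl; auto; rewrite IHL; auto. Qed.

Lemma mu_fold {E} p (l : list E) A :
  fold_right Rplus 0 (map (fun S => if excluded_middle_informative (A S)
     then p ^ length S * (1 - p) ^ (length l - length S) else 0) (sublists l)) = mu p l A.
Proof.
  rewrite fold_sum_rsum.
  induction l as [|x l IH] in A |- *.
  - simpl. destruct (excluded_middle_informative (A [])); simpl; ring.
  - cbn [sublists mu]. rewrite rsum_app, rsum_map. rewrite <- (IH A), <- (IH (fun S => A (x::S))).
    rewrite <- !rsum_scal. f_equal; apply rsum_ext; intros T HS; pose proof (sublists_length l T HS).
    + destruct (excluded_middle_informative (A T)); [|ring].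
      change (length (x::l)) with (S (length l)). rewrite Nat.sub_succ_l by auto. rewrite <- tech_pow_Rmult. ring.
    + change (length (x::l)) with (S (length l)). change (length (x::T)) with (S (length T)).
      destruct (excluded_middle_informative (A (x :: T))); [|ring].
      rewrite Nat.sub_succ. rewrite <- tech_pow_Rmult. ring.
Qed.

Lemma prob_mu n p : prob_realizable n p = mu p (pairs n) (realizable_R1 n).
Proof. unfold prob_realizable. apply mu_fold. Qed.

Open Scope R_scope.

Definition adj (E : list (nat*nat)) a b := In (a,b) E \/ In (b,a) E.

Lemma adj_sym E a b : adj E a b -> adj E b a.
Proof. unfold adj; tauto. Qed.

Fixpoint chain E (P : list nat) : Prop :=
  match P with
  | a :: ((b :: _) as P') => adj E a b /\ chain E P'
  | _ => True
  end.

Definition spath E (k a b : nat) (P : list nat) :=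
  (exists Q, P = a :: Q) /\ last P a = b /\ NoDup P /\ chain E P /\ (forall x, In x P -> (x < k)%nat).

Lemma chain_cat E P1 x P2 : chain E P1 -> chain E (x :: P2) ->
  (P1 = [] \/ adj E (last P1 0%nat) x) -> chain E (P1 ++ x :: P2).
Proof.
  induction P1 as [|a P1 IH]; intros H1 H2 H3; simpl; auto.
  destruct P1 as [|b P1].
  - simpl. destruct H3 as [H3|H3]; [discriminate|]. split; auto.
  - destruct H1 as [Hab H1]. split; auto. apply IH; auto.
    destruct H3 as [H3|H3]; [discriminate|]. right. exact H3.
Qed.

Lemma last_default {A} (l : list A) : forall x d d', last (x :: l) d = last (x :: l) d'.
Proof. induction l as [|y l IH]; intros x d d'; simpl; auto. destruct l; auto. apply (IH y). Qed.

Lemma last_cat {A} (P1 : list A) x P2 d : last (P1 ++ x :: P2) d = last (x :: P2) x.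
Proof.
  induction P1 as [|a P1 IH].
  - apply last_default.
  - rewrite <- IH. cbn [app]. change (last (a :: (P1 ++ x :: P2)) d = last (P1 ++ x :: P2) d).
    destruct (P1 ++ x :: P2) eqn:E; [destruct P1; discriminate|]. reflexivity.
Qed.

Lemma last_cons_ne {A} (a : A) l d : l <> [] -> last (a :: l) d = last l d.
Proof. destruct l; [congruence|auto]. Qed.

Lemma sp_lift E k k' a b P : spath E k a b P -> (k <= k')%nat -> spath E k' a b P.
Proof. intros (H1 & H2 & H3 & H4 & H5) Hk; repeat split; auto. intros x Hx; specialize (H5 x Hx); lia. Qed.

Lemma sp_refl E k a : (a < k)%nat -> spath E k a a [a].
Proof. intros Ha; repeat split; simpl; eauto. constructor; [intros []|constructor]. intros x [<-|[]]; auto. Qed.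

Lemma sp_cat E k k' a u w b x P1 P2 : spath E k a u P1 -> spath E k w b P2 ->
  adj E u x -> adj E x w -> ~ In x P1 -> ~ In x P2 -> (forall y, In y P1 -> ~ In y P2) ->
  (x < k')%nat -> (k <= k')%nat -> spath E k' a b (P1 ++ x :: P2).
Proof.
  intros ([Q1 ->] & L1 & N1 & C1 & B1) ([Q2 ->] & L2 & N2 & C2 & B2) H1 H2 H3 H4 H5 H6 H7.
  repeat split.
  - exists (Q1 ++ x :: w :: Q2). reflexivity.
  - rewrite <- app_comm_cons. rewrite last_cons_ne by (destruct Q1; discriminate).
    rewrite last_cat. rewrite last_cons_ne by discriminate. rewrite <- L2. apply last_default.
  - apply NoDup_app; auto.
    + constructor; auto.
    + intros y Hy [<-|Hy']; [contradiction| eapply H5; eauto].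
  - apply chain_cat; auto. simpl; split; auto. right. rewrite <- (last_default _ _ a 0%nat), L1; auto.
  - intros y Hy. apply in_app_or in Hy. destruct Hy as [Hy|[<-|Hy]]; [specialize (B1 y Hy)|idtac| specialize (B2 y Hy)]; lia.
Qed.

Lemma sp_snoc E k k' a u x P : spath E k a u P -> adj E u x -> ~ In x P -> (x < k')%nat -> (k <= k')%nat ->
  spath E k' a x (P ++ [x]).
Proof.
  intros ([Q ->] & L & N & C & B) H1 H2 H3 H4. repeat split.
  - exists (Q ++ [x]); auto.
  - rewrite <- app_comm_cons. rewrite last_cons_ne by (destruct Q; discriminate). apply last_last.
  - apply NoDup_app; auto. repeat constructor; auto. intros y Hy [<-|[]]; contradiction.
  - apply chain_cat; auto. simpl; auto. right. rewrite <- (last_default _ _ a 0%nat), L; auto.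
  - intros y Hy. apply in_app_or in Hy. destruct Hy as [Hy|[<-|[]]]; [specialize (B y Hy)|]; lia.
Qed.

Lemma sp_cons E k k' x w b P : spath E k w b P -> adj E x w -> ~ In x P -> (x < k')%nat -> (k <= k')%nat ->
  spath E k' x b (x :: P).
Proof.
  intros ([Q ->] & L & N & C & B) H1 H2 H3 H4. refine (conj _ (conj _ (conj _ (conj _ _)))).
  - eauto.
  - rewrite last_cons_ne by discriminate. rewrite <- L. apply last_default.
  - constructor; auto.
  - simpl; split; auto.
  - intros y [<-|Hy]; [|specialize (B y Hy)]; lia.
Qed.

Definition sg (d : bool) : Z := if d then 1%Z else (-1)%Z.
Definition adjk E k a b := adj E a b /\ (a < k)%nat /\ (b < k)%nat.
Definition deg2 E k v := exists a b, a <> b /\ adjk E k v a /\ adjk E k v b.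

Definition Inv E k (cl : nat -> nat) (z : nat -> Z) :=
 (forall a, (a<k)%nat -> (cl a < k)%nat) /\
 (forall a b, (a<k)%nat -> (b<k)%nat -> cl a = cl b -> z a = z b -> a = b) /\
 (forall a b, adjk E k a b -> cl a = cl b /\ (z a - z b = 1 \/ z a - z b = -1)%Z) /\
 (forall v, (v<k)%nat -> ~ deg2 E k v -> exists d, forall w, (w<k)%nat -> cl w = cl v -> (sg d * (z w - z v) <= 0)%Z) /\
 (forall a b, (a<k)%nat -> (b<k)%nat -> cl a = cl b -> exists P, spath E k a b P).

Definition NoStar E := forall v a b c, NoDup [a;b;c] -> adj E v a -> adj E v b -> adj E v c -> False.
Definition NoTri E := forall a b c, NoDup [a;b;c] -> adj E a b -> adj E b c -> adj E c a -> False.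
Definition NoC4 E := forall a b c d, NoDup [a;b;c;d] -> adj E a b -> adj E b c -> adj E c d -> adj E d a -> False.
Definition NoP5 E := forall a b c d e, NoDup [a;b;c;d;e] -> adj E a b -> adj E b c -> adj E c d -> adj E d e -> False.
Definition Good E := (forall a b, adj E a b -> a <> b) /\ NoStar E /\ NoTri E /\ NoC4 E /\ NoP5 E.

Lemma chain_cl E k cl z : Inv E k cl z -> forall P a, chain E (a :: P) -> (forall x, In x (a::P) -> (x < k)%nat) ->
  forall y, In y (a :: P) -> cl y = cl a.
Proof.
  intros (_ & _ & I3 & _) P. induction P as [|b P IH]; intros a C B y Hy.
  - destruct Hy as [<-|[]]; auto.
  - destruct C as [Hab C]. destruct Hy as [<-|Hy]; auto.
    assert (Hyb : cl y = cl b) by (apply (IH b C); [intros x Hx; apply B; right; exact Hx | exact Hy]).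
    rewrite Hyb.
    symmetry; apply (I3 a b). repeat split; auto; apply B; simpl; auto.
Qed.

Lemma path_cl E k cl z a b P : Inv E k cl z -> spath E k a b P -> forall y, In y P -> cl y = cl a.
Proof. intros I ([Q ->] & _ & _ & C & B). eapply chain_cl; eauto. Qed.

Lemma single_cl E k cl z v : Inv E k cl z -> (v < k)%nat -> (forall a, (a<k)%nat -> ~ adj E v a) ->
  forall y, (y < k)%nat -> cl y = cl v -> y = v.
Proof.
  intros I Hv Hn y Hy Hc. destruct I as (I1 & I2 & I3 & I4 & I5).
  destruct (I5 v y Hv Hy (eq_sym Hc)) as [P ([Q ->] & L & N & C & B)].
  destruct Q as [|p Q].
  - simpl in L; auto.
  - exfalso. apply (Hn p); [apply B; simpl; auto| apply C].
Qed.

Lemma opp_dir E k cl z u v du dv : Inv E k cl z -> (u<k)%nat -> (v<k)%nat -> u <> v -> cl u = cl v ->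
  (forall w, (w<k)%nat -> cl w = cl u -> (sg du * (z w - z u) <= 0)%Z) ->
  (forall w, (w<k)%nat -> cl w = cl v -> (sg dv * (z w - z v) <= 0)%Z) -> dv = negb du.
Proof.
  intros I Hu Hv Huv Hc H1 H2. destruct I as (I1 & I2 & _).
  specialize (H1 v Hv (eq_sym Hc)). specialize (H2 u Hu Hc).
  destruct du, dv; cbn [sg negb] in *; auto; exfalso; apply Huv; apply I2; auto; lia.
Qed.

Lemma nodup5 (a b c d e : nat) R : NoDup (a :: b :: c :: d :: R) -> ~ In e (a :: b :: c :: d :: R) ->
  NoDup [e;a;b;c;d].
Proof.
  intros N H. inversion N as [|? ? Na N1]; inversion N1 as [|? ? Nb N2]; inversion N2 as [|? ? Nc N3];
  inversion N3 as [|? ? Nd N4]; subst.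
  repeat constructor; simpl in *; intuition.
Qed.

Lemma no_cycle E k cl z u w : Good E -> Inv E k cl z -> (u<k)%nat -> (w<k)%nat -> u <> w ->
  adj E k u -> adj E k w -> cl u = cl w -> False.
Proof.
  intros (G0 & G1 & G2 & G3 & G4) I Hu Hw Huw Hku Hkw Hc.
  destruct I as (I1 & I2 & I3 & I4 & I5).
  destruct (I5 u w Hu Hw Hc) as [P ([Q ->] & L & N & C & B)].
  assert (Hk : ~ In k (u :: Q)) by (intros Hk; specialize (B k Hk); lia).
  destruct Q as [|p1 Q]; [simpl in L; congruence|].
  destruct C as [C1 C]. destruct Q as [|p2 Q].
  - simpl in L. subst p1. apply (G2 k u w); auto.
    + inversion N; subst. repeat constructor; simpl in *; intuition.
    + apply adj_sym; auto.
  - destruct C as [C2 C]. destruct Q as [|p3 Q].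
    + simpl in L. subst p2. apply (G3 k u p1 w); auto.
      * inversion N as [|? ? Na N1]; inversion N1 as [|? ? Nb N2]; subst.
        repeat constructor; simpl in *; intuition.
      * apply adj_sym; auto.
    + destruct C as [C3 C]. apply (G4 k u p1 p2 p3); auto. eapply nodup5; eauto.
Qed.

Lemma adjk_S E k a b : (forall a b, adj E a b -> a <> b) -> adjk E (S k) a b ->
  adjk E k a b \/ (a = k /\ (b < k)%nat /\ adj E k b) \/ (b = k /\ (a < k)%nat /\ adj E a k).
Proof.
  intros G0 (H1 & H2 & H3). specialize (G0 a b H1).
  destruct (Nat.eq_dec a k) as [->|Ha]; [right; left; repeat split; auto; lia|].
  destruct (Nat.eq_dec b k) as [->|Hb]; [right; right; repeat split; auto; lia|].
  left; repeat split; auto; lia.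
Qed.

Lemma deg2_mono E k v : ~ deg2 E (S k) v -> ~ deg2 E k v.
Proof. intros H (a & b & H1 & (A1 & A2 & A3) & (B1 & B2 & B3)). apply H. exists a, b; repeat split; auto; lia. Qed.

Lemma deg2_nbr E k v : (forall a b, adj E a b -> a <> b) -> (v < k)%nat -> adj E v k -> ~ deg2 E (S k) v ->
  forall a, (a < k)%nat -> ~ adj E v a.
Proof.
  intros G0 Hv Hvk H a Ha Hva. apply H. exists a, k. repeat split; auto; lia.
Qed.

Lemma nbr_nodeg E k u : Good E -> (u < k)%nat -> adj E k u -> ~ deg2 E k u.
Proof.
  intros (G0 & G1 & _) Hu Hku (a & b & Hab & (A1 & A2 & A3) & (B1 & B2 & B3)).
  apply (G1 u a b k); auto.
  - repeat constructor; simpl; intuition lia.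
  - apply adj_sym; auto.
Qed.

Definition upd {A} (k : nat) (x : A) (f : nat -> A) := fun a => if a =? k then x else f a.
Lemma upd_k {A} k (x : A) f : upd k x f k = x.
Proof. unfold upd; rewrite Nat.eqb_refl; auto. Qed.
Lemma upd_ne {A} k (x : A) f a : a <> k -> upd k x f a = f a.
Proof. intros H; unfold upd. rewrite (proj2 (Nat.eqb_neq a k) H); auto. Qed.

Lemma lt_S_cases a k : (a < S k)%nat -> a = k \/ (a < k)%nat.
Proof. lia. Qed.

Lemma step0 E k cl z : Good E -> Inv E k cl z -> (forall a, (a<k)%nat -> ~ adj E k a) ->
  Inv E (S k) (upd k k cl) (upd k 0%Z z).
Proof.
  intros G I Hn. pose proof I as (I1 & I2 & I3 & I4 & I5). pose proof G as (G0 & _).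
  refine (conj _ (conj _ (conj _ (conj _ _)))).
  - intros a Ha. destruct (lt_S_cases a k Ha) as [->|Ha']; [rewrite upd_k; lia|].
    rewrite upd_ne by lia. specialize (I1 a Ha'); lia.
  - intros a b Ha Hb. destruct (lt_S_cases a k Ha) as [->|Ha']; destruct (lt_S_cases b k Hb) as [->|Hb']; auto;
    repeat (rewrite upd_k || rewrite upd_ne by lia).
    + intros Hc; specialize (I1 b Hb'); lia.
    + intros Hc; specialize (I1 a Ha'); lia.
    + apply I2; auto.
  - intros a b Hab. destruct (adjk_S E k a b G0 Hab) as [H|[(-> & Hb & H)|(-> & Ha & H)]].
    + pose proof H as (_ & Ha & Hb). rewrite !upd_ne by lia. apply I3; auto.
    + exfalso; eapply Hn; eauto.
    + exfalso; eapply (Hn a); eauto. apply adj_sym; auto.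
  - intros v Hv Hd. destruct (lt_S_cases v k Hv) as [->|Hv'].
    + exists true. intros w Hw. rewrite upd_k. destruct (lt_S_cases w k Hw) as [->|Hw'].
      * rewrite !upd_k; cbn [sg]; lia.
      * rewrite upd_ne by lia. intros Hc; specialize (I1 w Hw'); lia.
    + destruct (I4 v Hv' (deg2_mono E k v Hd)) as [d Hd']. exists d. intros w Hw.
      rewrite (upd_ne k k cl v) by lia. rewrite (upd_ne k 0%Z z v) by lia.
      destruct (lt_S_cases w k Hw) as [->|Hw'].
      * rewrite upd_k. intros Hc; specialize (I1 v Hv'); lia.
      * rewrite !upd_ne by lia. apply Hd'; auto.
  - intros a b Ha Hb. destruct (lt_S_cases a k Ha) as [->|Ha']; destruct (lt_S_cases b k Hb) as [->|Hb'];
    repeat (rewrite upd_k || rewrite upd_ne by lia).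
    + intros _; exists [k]; apply sp_refl; lia.
    + intros Hc; specialize (I1 b Hb'); lia.
    + intros Hc; specialize (I1 a Ha'); lia.
    + intros Hc; destruct (I5 a b Ha' Hb' Hc) as [P HP]. exists P. eapply sp_lift; eauto.
Qed.

Lemma notin_lt E k a b P x : spath E k a b P -> (k <= x)%nat -> ~ In x P.
Proof. intros (_ & _ & _ & _ & B) Hx Hi. specialize (B x Hi). lia. Qed.

Lemma step1 E k cl z u : Good E -> Inv E k cl z -> (u < k)%nat -> adj E k u ->
  (forall a, (a<k)%nat -> adj E k a -> a = u) -> exists cl' z', Inv E (S k) cl' z'.
Proof.
  intros G I Hu Hku Hn. pose proof I as (I1 & I2 & I3 & I4 & I5). pose proof G as (G0 & _).
  destruct (I4 u Hu (nbr_nodeg E k u G Hu Hku)) as [du Hdu].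
  exists (upd k (cl u) cl), (upd k (z u + sg du)%Z z).
  refine (conj _ (conj _ (conj _ (conj _ _)))).
  - intros a Ha. destruct (lt_S_cases a k Ha) as [->|Ha']; [rewrite upd_k; specialize (I1 u Hu); lia|].
    rewrite upd_ne by lia. specialize (I1 a Ha'); lia.
  - intros a b Ha Hb. destruct (lt_S_cases a k Ha) as [->|Ha']; destruct (lt_S_cases b k Hb) as [->|Hb']; auto;
    repeat (rewrite upd_k || rewrite upd_ne by lia).
    + intros Hc Hz. specialize (Hdu b Hb' (eq_sym Hc)). destruct du; cbn [sg] in *; lia.
    + intros Hc Hz. specialize (Hdu a Ha' Hc). destruct du; cbn [sg] in *; lia.
    + apply I2; auto.
  - intros a b Hab. destruct (adjk_S E k a b G0 Hab) as [H|[(-> & Hb & H)|(-> & Ha & H)]].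
    + pose proof H as (_ & Ha & Hb). rewrite !upd_ne by lia. apply I3; auto.
    + rewrite (Hn b Hb H). rewrite upd_k, upd_ne by lia. rewrite upd_k, upd_ne by lia.
      split; auto. destruct du; cbn [sg]; lia.
    + assert (a = u) as -> by (apply Hn; auto; apply adj_sym; auto).
      rewrite upd_k, upd_ne by lia. rewrite upd_k, upd_ne by lia.
      split; auto. destruct du; cbn [sg]; lia.
  - intros v Hv Hd. destruct (lt_S_cases v k Hv) as [->|Hv'].
    + exists du. intros w Hw. rewrite !upd_k. destruct (lt_S_cases w k Hw) as [->|Hw'].
      * rewrite !upd_k; destruct du; cbn [sg]; lia.
      * rewrite !upd_ne by lia. intros Hc. specialize (Hdu w Hw' Hc). destruct du; cbn [sg] in *; lia.
    + rewrite (upd_ne k (cl u) cl v) by lia. rewrite (upd_ne k _ z v) by lia.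
      destruct (Nat.eq_dec v u) as [->|Hvu].
      * assert (Hs := single_cl E k cl z u I Hu (deg2_nbr E k u G0 Hu (adj_sym _ _ _ Hku) Hd)).
        exists (negb du). intros w Hw. destruct (lt_S_cases w k Hw) as [->|Hw'].
        -- rewrite !upd_k. destruct du; cbn [sg negb]; lia.
        -- rewrite !upd_ne by lia. intros Hc. rewrite (Hs w Hw' Hc). lia.
      * destruct (I4 v Hv' (deg2_mono E k v Hd)) as [dv Hdv]. exists dv. intros w Hw.
        destruct (lt_S_cases w k Hw) as [->|Hw'].
        -- rewrite !upd_k. intros Hc.
           rewrite (opp_dir E k cl z u v du dv I Hu Hv' (fun e => Hvu (eq_sym e)) Hc Hdu Hdv).
           specialize (Hdu v Hv' (eq_sym Hc)). destruct du; cbn [sg negb] in *; lia.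
        -- rewrite !upd_ne by lia. apply Hdv; auto.
  - intros a b Ha Hb. destruct (lt_S_cases a k Ha) as [->|Ha']; destruct (lt_S_cases b k Hb) as [->|Hb'];
    repeat (rewrite upd_k || rewrite upd_ne by lia).
    + intros _; exists [k]; apply sp_refl; lia.
    + intros Hc. destruct (I5 u b Hu Hb' Hc) as [P HP]. exists (k :: P).
      eapply sp_cons; eauto. eapply notin_lt; eauto.
    + intros Hc. destruct (I5 a u Ha' Hu Hc) as [P HP]. exists (P ++ [k]).
      eapply sp_snoc; eauto. apply adj_sym; auto. eapply notin_lt; eauto.
    + intros Hc; destruct (I5 a b Ha' Hb' Hc) as [P HP]. exists P. eapply sp_lift; eauto.
Qed.

Ltac uk := repeat (rewrite upd_k || rewrite upd_ne by lia).

Lemma step2 E k cl z u w : Good E -> Inv E k cl z -> (u < k)%nat -> (w < k)%nat -> u <> w ->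
  adj E k u -> adj E k w ->
  (forall a, (a<k)%nat -> adj E k a -> a = u \/ a = w) -> exists cl' z', Inv E (S k) cl' z'.
Proof.
  intros G I Hu Hw Huw Hku Hkw Hn. pose proof I as (I1 & I2 & I3 & I4 & I5). pose proof G as (G0 & _).
  assert (Hcuw : cl u <> cl w) by (intros Hc; exact (no_cycle E k cl z u w G I Hu Hw Huw Hku Hkw Hc)).
  destruct (I4 u Hu (nbr_nodeg E k u G Hu Hku)) as [du Hdu].
  destruct (I4 w Hw (nbr_nodeg E k w G Hw Hkw)) as [dw Hdw].
  exists (upd k (cl u) (fun y => if cl y =? cl w then cl u else cl y)),
         (upd k (z u + sg du)%Z (fun y => if cl y =? cl w then (z u + 2 * sg du - sg du * sg dw * (z y - z w))%Z else z y)).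
  refine (conj _ (conj _ (conj _ (conj _ _)))).
  - intros a Ha. destruct (lt_S_cases a k Ha) as [->|Ha']; uk; [specialize (I1 u Hu); lia|].
    destruct (Nat.eqb_spec (cl a) (cl w)); [specialize (I1 u Hu)| specialize (I1 a Ha')]; lia.
  - intros a b Ha Hb. destruct (lt_S_cases a k Ha) as [->|Ha']; destruct (lt_S_cases b k Hb) as [->|Hb']; auto; uk.
    + destruct (Nat.eqb_spec (cl b) (cl w)); intros Hc Hz.
      * specialize (Hdw b Hb' e). destruct du, dw; cbn [sg] in *; lia.
      * specialize (Hdu b Hb' (eq_sym Hc)). destruct du, dw; cbn [sg] in *; lia.
    + destruct (Nat.eqb_spec (cl a) (cl w)); intros Hc Hz.
      * specialize (Hdw a Ha' e). destruct du, dw; cbn [sg] in *; lia.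
      * specialize (Hdu a Ha' Hc). destruct du, dw; cbn [sg] in *; lia.
    + destruct (Nat.eqb_spec (cl a) (cl w)); destruct (Nat.eqb_spec (cl b) (cl w)); intros Hc Hz.
      * apply I2; auto; [congruence| destruct du, dw; cbn [sg] in *; lia].
      * specialize (Hdw a Ha' e). specialize (Hdu b Hb' (eq_sym Hc)). destruct du, dw; cbn [sg] in *; lia.
      * specialize (Hdw b Hb' e). specialize (Hdu a Ha' Hc). destruct du, dw; cbn [sg] in *; lia.
      * apply I2; auto.
  - intros a b Hab. destruct (adjk_S E k a b G0 Hab) as [H|[(-> & Hb & H)|(-> & Ha & H)]].
    + pose proof H as (_ & Ha & Hb). uk. destruct (I3 a b H) as [Hc Hz].
      destruct (Nat.eqb_spec (cl a) (cl w)); destruct (Nat.eqb_spec (cl b) (cl w)); try congruence.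
      * split; auto. destruct du, dw; cbn [sg] in *; lia.
      * split; auto.
    + destruct (Hn b Hb H) as [->| ->]; uk.
      * destruct (Nat.eqb_spec (cl u) (cl w)); [congruence|]. split; auto. destruct du; cbn [sg]; lia.
      * rewrite Nat.eqb_refl. split; auto. destruct du, dw; cbn [sg]; lia.
    + destruct (Hn a Ha (adj_sym _ _ _ H)) as [->| ->]; uk.
      * destruct (Nat.eqb_spec (cl u) (cl w)); [congruence|]. split; auto. destruct du; cbn [sg]; lia.
      * rewrite Nat.eqb_refl. split; auto. destruct du, dw; cbn [sg]; lia.
  - intros v Hv Hd. destruct (lt_S_cases v k Hv) as [->|Hv'].
    + exfalso. apply Hd. exists u, w. repeat split; auto; lia.
    + destruct (Nat.eq_dec v u) as [->|Hvu].
      * assert (Hs := single_cl E k cl z u I Hu (deg2_nbr E k u G0 Hu (adj_sym _ _ _ Hku) Hd)).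
        exists (negb du). intros y Hy. destruct (lt_S_cases y k Hy) as [->|Hy']; uk;
          destruct (Nat.eqb_spec (cl u) (cl w)); try congruence.
        -- destruct du; cbn [sg negb]; lia.
        -- destruct (Nat.eqb_spec (cl y) (cl w)); intros Hc.
           ++ specialize (Hdw y Hy' e). destruct du, dw; cbn [sg negb] in *; lia.
           ++ rewrite (Hs y Hy' Hc). lia.
      * destruct (Nat.eq_dec v w) as [->|Hvw].
        -- assert (Hs := single_cl E k cl z w I Hw (deg2_nbr E k w G0 Hw (adj_sym _ _ _ Hkw) Hd)).
           exists du. intros y Hy. destruct (lt_S_cases y k Hy) as [->|Hy']; uk; rewrite Nat.eqb_refl.
           ++ destruct du, dw; cbn [sg] in *; lia.
           ++ destruct (Nat.eqb_spec (cl y) (cl w)); intros Hc.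
              ** rewrite (Hs y Hy' e). lia.
              ** specialize (Hdu y Hy' Hc). destruct du, dw; cbn [sg] in *; lia.
        -- destruct (I4 v Hv' (deg2_mono E k v Hd)) as [dv Hdv]. uk.
           destruct (Nat.eqb_spec (cl v) (cl w)) as [HvW|HvW].
           ++ rewrite (opp_dir E k cl z w v dw dv I Hw Hv' (fun e => Hvw (eq_sym e)) (eq_sym HvW) Hdw Hdv) in Hdv.
              exists du. intros y Hy. destruct (lt_S_cases y k Hy) as [->|Hy']; uk.
              ** intros _. specialize (Hdw v Hv' HvW). destruct du, dw; cbn [sg negb] in *; lia.
              ** destruct (Nat.eqb_spec (cl y) (cl w)); intros Hc.
                 --- specialize (Hdv y Hy' ltac:(congruence)). destruct du, dw; cbn [sg negb] in *; lia.
                 --- specialize (Hdu y Hy' Hc). specialize (Hdw v Hv' HvW). destruct du, dw; cbn [sg negb] in *; lia.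
           ++ destruct (Nat.eq_dec (cl v) (cl u)) as [HvU|HvU].
              ** rewrite (opp_dir E k cl z u v du dv I Hu Hv' (fun e => Hvu (eq_sym e)) (eq_sym HvU) Hdu Hdv) in Hdv.
                 exists (negb du). intros y Hy. destruct (lt_S_cases y k Hy) as [->|Hy']; uk.
                 --- intros _. specialize (Hdu v Hv' HvU). destruct du, dw; cbn [sg negb] in *; lia.
                 --- destruct (Nat.eqb_spec (cl y) (cl w)); intros Hc.
                     +++ specialize (Hdu v Hv' HvU). specialize (Hdw y Hy' e). destruct du, dw; cbn [sg negb] in *; lia.
                     +++ apply Hdv; auto.
              ** exists dv. intros y Hy. destruct (lt_S_cases y k Hy) as [->|Hy']; uk.
                 --- intros Hc; congruence.
                 --- destruct (Nat.eqb_spec (cl y) (cl w)); intros Hc; [congruence|]. apply Hdv; auto.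
  - intros a b Ha Hb. destruct (lt_S_cases a k Ha) as [->|Ha']; destruct (lt_S_cases b k Hb) as [->|Hb']; uk.
    + intros _; exists [k]; apply sp_refl; lia.
    + destruct (Nat.eqb_spec (cl b) (cl w)); intros Hc.
      * destruct (I5 w b Hw Hb' (eq_sym e)) as [P HP]. exists (k :: P).
        eapply sp_cons; eauto. eapply notin_lt; eauto.
      * destruct (I5 u b Hu Hb' Hc) as [P HP]. exists (k :: P).
        eapply sp_cons; eauto. eapply notin_lt; eauto.
    + destruct (Nat.eqb_spec (cl a) (cl w)); intros Hc.
      * destruct (I5 a w Ha' Hw e) as [P HP]. exists (P ++ [k]).
        eapply sp_snoc; eauto. apply adj_sym; auto. eapply notin_lt; eauto.
      * destruct (I5 a u Ha' Hu Hc) as [P HP]. exists (P ++ [k]).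
        eapply sp_snoc; eauto. apply adj_sym; auto. eapply notin_lt; eauto.
    + destruct (Nat.eqb_spec (cl a) (cl w)) as [Ea|Ea]; destruct (Nat.eqb_spec (cl b) (cl w)) as [Eb|Eb]; intros Hc.
      * destruct (I5 a b Ha' Hb' ltac:(congruence)) as [P HP]. exists P. eapply sp_lift; eauto.
      * destruct (I5 a w Ha' Hw Ea) as [P1 HP1]. destruct (I5 u b Hu Hb' Hc) as [P2 HP2].
        exists (P1 ++ k :: P2). eapply sp_cat; eauto.
        -- apply adj_sym; auto.
        -- eapply notin_lt; eauto.
        -- eapply notin_lt; eauto.
        -- intros y Hy1 Hy2. pose proof (path_cl E k cl z a w P1 I HP1 y Hy1).
           pose proof (path_cl E k cl z u b P2 I HP2 y Hy2). congruence.
      * destruct (I5 a u Ha' Hu Hc) as [P1 HP1]. destruct (I5 w b Hw Hb' (eq_sym Eb)) as [P2 HP2].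
        exists (P1 ++ k :: P2). eapply sp_cat; eauto.
        -- apply adj_sym; auto.
        -- eapply notin_lt; eauto.
        -- eapply notin_lt; eauto.
        -- intros y Hy1 Hy2. pose proof (path_cl E k cl z a u P1 I HP1 y Hy1).
           pose proof (path_cl E k cl z w b P2 I HP2 y Hy2). congruence.
      * destruct (I5 a b Ha' Hb' Hc) as [P HP]. exists P. eapply sp_lift; eauto.
Qed.

Lemma inv_all E : Good E -> forall k, exists cl z, Inv E k cl z.
Proof.
  intros G. pose proof G as (G0 & G1 & _). induction k as [|k IH].
  - exists (fun _ => 0%nat), (fun _ => 0%Z). unfold Inv.
    refine (conj _ (conj _ (conj _ (conj _ _)))); intros a; try lia.
    + intros b (_ & H & _); lia.
  - destruct IH as (cl & z & I).
    destruct (classic (exists u, (u < k)%nat /\ adj E k u)) as [(u & Hu & Hku)|Hno].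
    + destruct (classic (exists w, (w < k)%nat /\ adj E k w /\ w <> u)) as [(w & Hw & Hkw & Hwu)|Hno2].
      * eapply (step2 E k cl z u w); eauto.
        intros a Ha Hka. destruct (Nat.eq_dec a u); auto. destruct (Nat.eq_dec a w); auto.
        exfalso. apply (G1 k u w a); auto. repeat constructor; simpl; intuition.
      * eapply (step1 E k cl z u); eauto.
        intros a Ha Hka. destruct (Nat.eq_dec a u); auto. exfalso; apply Hno2; eauto.
    + exists (upd k k cl), (upd k 0%Z z). apply step0; auto.
      intros a Ha Hka; apply Hno; eauto.
Qed.

Lemma in_pairs n i j : In (i,j) (pairs n) <-> (i < j < n)%nat.
Proof.
  unfold pairs. rewrite in_flat_map. split.
  - intros (x & Hx & Hi). apply in_seq in Hx. apply in_map_iff in Hi. destruct Hi as (y & Hy & Hy').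
    inversion Hy; subst. apply in_seq in Hy'. lia.
  - intros H. exists j. split; [apply in_seq; lia|]. apply in_map_iff. exists i. split; auto. apply in_seq; lia.
Qed.

Lemma embed n E : incl E (pairs n) -> Good E -> realizable_R1 n E.
Proof.
  intros Hi G. destruct (inv_all E G n) as (cl & z & I). destruct I as (I1 & I2 & I3 & _).
  exists (fun a => IZR (z a) + INR (cl a) / INR (S n)).
  assert (HN : 0 < INR (S n)) by (apply lt_0_INR; lia).
  split.
  - intros i j Hi' Hj' Heq.
    assert (HZ : IZR (z i * Z.of_nat (S n) + Z.of_nat (cl i)) = IZR (z j * Z.of_nat (S n) + Z.of_nat (cl j))).
    { rewrite !plus_IZR, !mult_IZR, <- !INR_IZR_INZ.
      apply (Rmult_eq_compat_r (INR (S n))) in Heq. field_simplify in Heq; lra. }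
    apply eq_IZR in HZ. pose proof (I1 i Hi'). pose proof (I1 j Hj').
    rewrite Nat2Z.inj_succ in HZ.
    assert (H1 : z i = z j).
    { destruct (Z.lt_trichotomy (z i) (z j)) as [h|[h|h]]; auto; exfalso.
      - assert (1 <= z j - z i)%Z by lia.
        assert ((z j - z i) * (Z.of_nat n + 1) >= Z.of_nat n + 1)%Z by nia. nia.
      - assert (1 <= z i - z j)%Z by lia.
        assert ((z i - z j) * (Z.of_nat n + 1) >= Z.of_nat n + 1)%Z by nia. nia. }
    rewrite H1 in HZ. assert (H2 : cl i = cl j) by lia.
    apply I2; auto.
  - intros [i j] He. pose proof (Hi _ He) as Hp. apply in_pairs in Hp. simpl.
    destruct (I3 i j) as [Hc Hz]. { repeat split; [left; auto| lia | lia]. }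
    rewrite Hc. 
    match goal with |- Rabs ?X = 1 => replace X with (IZR (z i - z j)) by (rewrite minus_IZR; ring) end.
    destruct Hz as [Hz | Hz]; rewrite Hz; [apply Rabs_R1| unfold Rabs; destruct (Rcase_abs _); lra].
Qed.

Definition edge (a b : nat) : nat * nat := if a <? b then (a,b) else (b,a).

Lemma edge_in_pairs n a b : a <> b -> (a < n)%nat -> (b < n)%nat -> In (edge a b) (pairs n).
Proof. intros. unfold edge. destruct (Nat.ltb_spec a b); apply in_pairs; lia. Qed.

Lemma edge_eq a b c d : edge a b = edge c d -> (a = c /\ b = d) \/ (a = d /\ b = c).
Proof. unfold edge. intros He; destruct (Nat.ltb_spec a b), (Nat.ltb_spec c d); inversion He; subst; auto. Qed.

Lemma edge_neq a b c d : ~ ((a = c /\ b = d) \/ (a = d /\ b = c)) -> edge a b <> edge c d.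
Proof. intros H He; apply H, edge_eq, He. Qed.

Lemma adj_edge E n a b : incl E (pairs n) -> adj E a b -> In (edge a b) E.
Proof.
  intros Hi [H|H]; unfold edge.
  - pose proof (proj1 (in_pairs n a b) (Hi _ H)). destruct (Nat.ltb_spec a b); [auto|lia].
  - pose proof (proj1 (in_pairs n b a) (Hi _ H)). destruct (Nat.ltb_spec a b); [lia|auto].
Qed.

Lemma edge_adj E a b : In (edge a b) E -> adj E a b.
Proof. unfold edge, adj. destruct (a <? b); auto. Qed.

Lemma adj_bounds E n a b : incl E (pairs n) -> adj E a b -> a <> b /\ (a < n)%nat /\ (b < n)%nat.
Proof. intros Hi [H|H]; apply Hi, in_pairs in H; lia. Qed.

Fixpoint tup (k n : nat) : list (list nat) :=
  match k with
  | O => [[]]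
  | S k' => flat_map (fun t => map (fun x => x :: t) (seq 0 n)) (tup k' n)
  end.

Lemma tup_length k n : length (tup k n) = (n ^ k)%nat.
Proof.
  induction k; simpl; auto.
  rewrite <- IHk. clear IHk. induction (tup k n); simpl; auto.
  rewrite length_app, length_map, length_seq, IHl. lia.
Qed.

Lemma tup_in k n t : length t = k -> (forall x, In x t -> (x < n)%nat) -> In t (tup k n).
Proof.
  revert t; induction k; intros t Hl Hb; destruct t as [|x t]; simpl in *; try lia; auto.
  apply in_flat_map. exists t. split; [apply IHk; auto; lia|].
  apply in_map_iff. exists x; split; auto. apply in_seq. specialize (Hb x (or_introl eq_refl)); lia.
Qed.

Fixpoint srt (L : list nat) : Prop :=
  match L with [] => True | x :: L' => (forall y, In y L' -> (x < y)%nat) /\ srt L' end.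

Fixpoint pr (L : list nat) : list (list nat) :=
  match L with [] => [] | x :: L' => map (fun y => [x;y]) L' ++ pr L' end.
Fixpoint trip (L : list nat) : list (list nat) :=
  match L with [] => [] | x :: L' => map (cons x) (pr L') ++ trip L' end.

Lemma srt_nodup L : srt L -> NoDup L.
Proof. induction L as [|x L IH]; simpl; intros; [constructor|]. destruct H. constructor; auto.
  intros Hx; specialize (H x Hx); lia. Qed.

Lemma pr_in L t : srt L -> In t (pr L) <-> exists x y, t = [x;y] /\ (x < y)%nat /\ In x L /\ In y L.
Proof.
  induction L as [|a L IH]; simpl; intros HL; [split; [intros []| intros (x&y&_&_&[]&_)]|].
  destruct HL as [Ha HL]. rewrite in_app_iff, in_map_iff, IH by auto. split.
  - intros [(y & <- & Hy)|(x & y & -> & H1 & H2 & H3)].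
    + exists a, y; repeat split; auto.
    + exists x, y; repeat split; auto.
  - intros (x & y & -> & H1 & [<-|H2] & [<-|H3]).
    + lia.
    + left; exists y; auto.
    + specialize (Ha x H2); lia.
    + right; exists x, y; auto.
Qed.

Lemma trip_in L t : srt L -> In t (trip L) <->
  exists x y z, t = [x;y;z] /\ (x < y < z)%nat /\ In x L /\ In y L /\ In z L.
Proof.
  induction L as [|a L IH]; simpl; intros HL; [split; [intros []| intros (x&y&z&_&_&[]&_)]|].
  pose proof HL as [Ha HL']. rewrite in_app_iff, in_map_iff, IH by auto. split.
  - intros [(s & <- & Hs)|(x & y & z & -> & H1 & H2 & H3 & H4)].
    + apply pr_in in Hs; auto. destruct Hs as (x & y & -> & H1 & H2 & H3).
      exists a, x, y; repeat split; auto.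
    + exists x, y, z. split; [auto|]. split; [lia|]. simpl; auto.
  - intros (x & y & z & -> & H1 & Hx & Hy & Hz). destruct Hx as [<-|Hx].
    + destruct Hy as [<-|Hy]; [lia|]. destruct Hz as [<-|Hz]; [lia|].
      left. exists [y;z]. split; auto. apply pr_in; auto. exists y, z. split; auto; split; auto; lia.
    + pose proof (Ha x Hx). destruct Hy as [<-|Hy]; [lia|]. destruct Hz as [<-|Hz]; [lia|].
      right; exists x, y, z. split; auto; split; auto.
Qed.

Lemma pr_nodup L : srt L -> NoDup (pr L).
Proof.
  induction L as [|a L IH]; simpl; intros HL; [constructor|]. destruct HL as [Ha HL].
  apply NoDup_app; auto.
  - apply NoDup_map_NoDup_ForallPairs; [|apply srt_nodup; auto]. intros y1 y2 _ _ H; inversion H; auto.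
  - intros t Ht1 Ht2. apply in_map_iff in Ht1. destruct Ht1 as (y & <- & Hy).
    apply pr_in in Ht2; auto. destruct Ht2 as (x & y' & E & H1 & H2 & H3). inversion E; subst.
    specialize (Ha x H2); lia.
Qed.

Lemma trip_nodup L : srt L -> NoDup (trip L).
Proof.
  induction L as [|a L IH]; simpl; intros HL; [constructor|]. pose proof HL as [Ha HL'].
  apply NoDup_app; auto.
  - apply NoDup_map_NoDup_ForallPairs; [|apply pr_nodup; auto]. intros y1 y2 _ _ H; inversion H; auto.
  - intros t Ht1 Ht2. apply in_map_iff in Ht1. destruct Ht1 as (y & <- & Hy).
    apply trip_in in Ht2; auto. destruct Ht2 as (x & y' & z & E & H1 & H2 & H3). inversion E; subst.
    specialize (Ha x H2); lia.
Qed.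

Lemma pr_length L : (2 * length (pr L) = length L * (length L - 1))%nat.
Proof. induction L as [|x L IH]; simpl; auto. rewrite length_app, length_map. destruct (length L); nia. Qed.

Lemma trip_length L : (6 * length (trip L) = length L * (length L - 1) * (length L - 2))%nat.
Proof.
  induction L as [|x L IH]; simpl; auto. rewrite length_app, length_map.
  pose proof (pr_length L). destruct (length L) as [|[|m]]; simpl in *; nia.
Qed.

Lemma srt_seq a m : srt (seq a m).
Proof. revert a; induction m; intros a; simpl; auto. split; auto. intros y Hy; apply in_seq in Hy; lia. Qed.

Lemma srt_app A B : srt A -> srt B -> (forall x y, In x A -> In y B -> (x < y)%nat) -> srt (A ++ B).
Proof.
  induction A as [|a A IH]; simpl; intros HA HB H; auto. destruct HA as [Ha HA]. split.
  - intros y Hy. apply in_app_or in Hy. destruct Hy; auto.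
  - apply IH; auto.
Qed.

Definition Lv n v := seq 0 v ++ seq (S v) (n - S v).

Lemma Lv_srt n v : srt (Lv n v).
Proof. apply srt_app; try apply srt_seq. intros x y Hx Hy; apply in_seq in Hx; apply in_seq in Hy; lia. Qed.

Lemma Lv_in n v y : (v < n)%nat -> In y (Lv n v) <-> (y < n)%nat /\ y <> v.
Proof. intros Hv; unfold Lv; rewrite in_app_iff, !in_seq; lia. Qed.

Lemma Lv_length n v : (v < n)%nat -> length (Lv n v) = (n - 1)%nat.
Proof. intros; unfold Lv; rewrite length_app, !length_seq; lia. Qed.

Definition stars n := flat_map (fun v => map (cons v) (trip (Lv n v))) (seq 0 n).

Lemma stars_in n t : In t (stars n) <-> exists v x y z, t = [v;x;y;z] /\ (v < n)%nat /\ (x < y < z)%nat /\ (z < n)%nat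
   /\ v <> x /\ v <> y /\ v <> z.
Proof.
  unfold stars. rewrite in_flat_map. split.
  - intros (v & Hv & Ht). apply in_seq in Hv. apply in_map_iff in Ht. destruct Ht as (s & <- & Hs).
    apply trip_in in Hs; [|apply Lv_srt]. destruct Hs as (x & y & z & -> & H1 & H2 & H3 & H4).
    rewrite Lv_in in H2, H3, H4 by lia. exists v, x, y, z. repeat split; lia.
  - intros (v & x & y & z & -> & H1 & H2 & H3 & H4 & H5 & H6). exists v. split; [apply in_seq; lia|].
    apply in_map_iff. exists [x;y;z]. split; auto. apply trip_in; [apply Lv_srt|].
    exists x, y, z. rewrite !Lv_in by lia. repeat split; lia.
Qed.

Lemma stars_nodup n : NoDup (stars n).
Proof.
  unfold stars. generalize (seq_NoDup n 0). generalize (seq 0 n).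
  intros L. induction L as [|v L IH]; intros ND; simpl; [constructor|]. inversion ND; subst.
  apply NoDup_app; auto.
  - apply NoDup_map_NoDup_ForallPairs; [|apply trip_nodup, Lv_srt]. intros a b _ _ H; inversion H; auto.
  - intros t Ht1 Ht2. apply in_map_iff in Ht1. destruct Ht1 as (s & <- & _).
    apply in_flat_map in Ht2. destruct Ht2 as (v' & Hv' & Ht). apply in_map_iff in Ht.
    destruct Ht as (s' & E & _). inversion E; subst. contradiction.
Qed.

Lemma stars_length n : (6 * length (stars n) = n * (n-1) * (n-2) * (n-3))%nat.
Proof.
  unfold stars. assert (forall L, (forall v, In v L -> (v < n)%nat) ->
    (6 * length (flat_map (fun v => map (cons v) (trip (Lv n v))) L) = length L * ((n-1) * (n-2) * (n-3)))%nat).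
  { induction L as [|v L IH]; intros HL; simpl; auto. rewrite length_app, length_map.
    pose proof (trip_length (Lv n v)). rewrite Lv_length in H by (apply HL; left; auto).
    assert (IH' := IH (fun v' Hv' => HL v' (or_intror Hv'))).
    replace (n - 1 - 1)%nat with (n-2)%nat in H by lia. replace (n - 1 - 2)%nat with (n-3)%nat in H by lia. lia. }
  rewrite H by (intros v Hv; apply in_seq in Hv; lia). rewrite length_seq. lia.
Qed.

Open Scope R_scope.

Lemma mu_mono_in {E} p (l : list E) A B : 0 <= p <= 1 ->
  (forall S, incl S l -> A S -> B S) -> mu p l A <= mu p l B.
Proof.
  intros Hp H. rewrite (mu_ext_in p l A (fun S => A S /\ incl S l)) by tauto.
  apply mu_mono; auto. intros S [h1 h2]; auto.
Qed.

Lemma pairs_nodup n : NoDup (pairs n).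
Proof.
  unfold pairs.
  assert (forall L, NoDup L -> (forall j, In j L -> True) ->
    NoDup (flat_map (fun j => map (fun i => (i, j)) (seq 0 j)) L)).
  { induction L as [|j L IH]; intros ND _; simpl; [constructor|]. inversion ND; subst.
    apply NoDup_app; auto.
    - apply NoDup_map_NoDup_ForallPairs; [|apply seq_NoDup]. intros a b _ _ H; inversion H; auto.
    - intros e He1 He2. apply in_map_iff in He1. destruct He1 as (i & <- & _).
      apply in_flat_map in He2. destruct He2 as (j' & Hj' & He). apply in_map_iff in He.
      destruct He as (i' & E & _). inversion E; subst. contradiction. }
  apply H; auto. apply seq_NoDup.
Qed.

Lemma adj_mono S T a b : incl S T -> adj S a b -> adj T a b.
Proof. intros H [h|h]; [left|right]; apply H; auto. Qed.

Lemma mu_edges n p F : 0 <= p <= 1 -> NoDup F -> incl F (pairs n) ->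
  mu p (pairs n) (fun S => incl F S) = p ^ length F.
Proof. intros; apply mu_incl; auto. apply pairs_nodup. Qed.

Lemma bad_bound n p k m (F : list nat -> list (nat*nat)) (Q : list (nat*nat) -> Prop) : 0 <= p <= 1 ->
  (forall S, incl S (pairs n) -> Q S -> exists t, In t (tup k n) /\ NoDup t /\ incl (F t) S) ->
  (forall t, In t (tup k n) -> NoDup t -> NoDup (F t) /\ incl (F t) (pairs n) /\ length (F t) = m) ->
  mu p (pairs n) Q <= INR (n ^ k) * p ^ m.
Proof.
  intros Hp H1 H2.
  eapply Rle_trans. { apply (mu_mono_in p (pairs n) Q (fun S => exists t, In t (tup k n) /\ (NoDup t /\ incl (F t) S))); auto. }
  eapply Rle_trans. { apply (union_bound p (pairs n) (fun t S => NoDup t /\ incl (F t) S)); auto. }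
  rewrite <- tup_length, <- rsum_const. apply rsum_le. intros t Ht.
  rewrite mu_const_and. destruct (excluded_middle_informative (NoDup t)) as [h|h].
  - destruct (H2 t Ht h) as (A & B & C). rewrite mu_edges; auto. rewrite C; lra.
  - apply pow_le; lra.
Qed.

Definition Fstar (t : list nat) := match t with [v;x;y;z] => [edge v x; edge v y; edge v z] | _ => [] end.
Definition Ftri (t : list nat) := match t with [a;b;c] => [edge a b; edge b c; edge c a] | _ => [] end.
Definition FC4 (t : list nat) := match t with [a;b;c;d] => [edge a b; edge b c; edge c d; edge d a] | _ => [] end.
Definition FP5 (t : list nat) := match t with [a;b;c;d;e] => [edge a b; edge b c; edge c d; edge d e] | _ => [] end.

Lemma nodup_iff3 {A} (a b c : A) : NoDup [a;b;c] <-> a <> b /\ a <> c /\ b <> c.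
Proof. split; intros H.
  - rewrite !NoDup_cons_iff in H; simpl in H; intuition.
  - repeat constructor; simpl; intuition. Qed.
Lemma nodup_iff4 {A} (a b c d : A) : NoDup [a;b;c;d] <-> a <> b /\ a <> c /\ a <> d /\ b <> c /\ b <> d /\ c <> d.
Proof. split; intros H.
  - rewrite !NoDup_cons_iff in H; simpl in H; intuition.
  - repeat constructor; simpl; intuition. Qed.
Lemma nodup_iff5 {A} (a b c d e : A) : NoDup [a;b;c;d;e] <-> a <> b /\ a <> c /\ a <> d /\ a <> e /\ b <> c /\ b <> d /\ b <> e /\ c <> d /\ c <> e /\ d <> e.
Proof. split; intros H.
  - rewrite !NoDup_cons_iff in H; simpl in H; intuition.
  - repeat constructor; simpl; intuition. Qed.

Lemma tup_len k n t : In t (tup k n) -> length t = k /\ (forall x, In x t -> (x < n)%nat).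
Proof.
  revert t; induction k; intros t Ht; simpl in Ht.
  - destruct Ht as [<-|[]]; simpl; split; auto; intros x [].
  - apply in_flat_map in Ht. destruct Ht as (s & Hs & Ht). apply in_map_iff in Ht. destruct Ht as (x & <- & Hx).
    apply in_seq in Hx. destruct (IHk s Hs) as [A B]. simpl; split; [lia|]. intros y [<-|Hy]; auto; lia.
Qed.

Ltac edneq := apply edge_neq; lia.
Ltac incl_pairs := let e := fresh in let He := fresh in intros e He; simpl in He;
  repeat (destruct He as [<-|He]; [apply edge_in_pairs; lia|]); destruct He.

Lemma tri_bound n p : 0 <= p <= 1 ->
  mu p (pairs n) (fun S => ~ NoTri S) <= INR (n ^ 3) * p ^ 3.
Proof.
  intros Hp. apply (bad_bound n p 3 3 Ftri); auto.
  - intros S HS H. apply NNPP; intros Hn; apply H. intros a b c Hd H1 H2 H3. apply Hn.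
    exists [a;b;c]. pose proof (adj_bounds S n _ _ HS H1). pose proof (adj_bounds S n _ _ HS H2).
    split; [apply tup_in; auto; intros x Hx; simpl in Hx; intuition lia|]. split; auto.
    intros e He; simpl in He. destruct He as [<-|[<-|[<-|[]]]]; eapply adj_edge; eauto.
  - intros t Ht Hd. destruct (tup_len _ _ _ Ht) as [Hl Hb].
    destruct t as [|a [|b [|c [|]]]]; simpl in Hl; try lia.
    apply nodup_iff3 in Hd. assert (a < n /\ b < n /\ c < n)%nat by (repeat split; apply Hb; simpl; tauto).
    simpl. split; [|split; auto].
    + apply nodup_iff3; repeat split; edneq.
    + incl_pairs.
Qed.

Lemma c4_bound n p : 0 <= p <= 1 ->
  mu p (pairs n) (fun S => ~ NoC4 S) <= INR (n ^ 4) * p ^ 4.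
Proof.
  intros Hp. apply (bad_bound n p 4 4 FC4); auto.
  - intros S HS H. apply NNPP; intros Hn; apply H. intros a b c d Hd H1 H2 H3 H4. apply Hn.
    exists [a;b;c;d]. pose proof (adj_bounds S n _ _ HS H1). pose proof (adj_bounds S n _ _ HS H3).
    split; [apply tup_in; auto; intros x Hx; simpl in Hx; intuition lia|]. split; auto.
    intros e He; simpl in He. destruct He as [<-|[<-|[<-|[<-|[]]]]]; eapply adj_edge; eauto.
  - intros t Ht Hd. destruct (tup_len _ _ _ Ht) as [Hl Hb].
    destruct t as [|a [|b [|c [|d [|]]]]]; simpl in Hl; try lia.
    apply nodup_iff4 in Hd. assert (a < n /\ b < n /\ c < n /\ d < n)%nat by (repeat split; apply Hb; simpl; tauto).
    simpl. split; [|split; auto].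
    + apply nodup_iff4; repeat split; edneq.
    + incl_pairs.
Qed.

Lemma p5_bound n p : 0 <= p <= 1 ->
  mu p (pairs n) (fun S => ~ NoP5 S) <= INR (n ^ 5) * p ^ 4.
Proof.
  intros Hp. apply (bad_bound n p 5 4 FP5); auto.
  - intros S HS H. apply NNPP; intros Hn; apply H. intros a b c d e Hd H1 H2 H3 H4. apply Hn.
    exists [a;b;c;d;e]. pose proof (adj_bounds S n _ _ HS H1). pose proof (adj_bounds S n _ _ HS H3).
    pose proof (adj_bounds S n _ _ HS H4).
    split; [apply tup_in; auto; intros x Hx; simpl in Hx; intuition lia|]. split; auto.
    intros f Hf; simpl in Hf. destruct Hf as [<-|[<-|[<-|[<-|[]]]]]; eapply adj_edge; eauto.
  - intros t Ht Hd. destruct (tup_len _ _ _ Ht) as [Hl Hb].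
    destruct t as [|a [|b [|c [|d [|e [|]]]]]]; simpl in Hl; try lia.
    apply nodup_iff5 in Hd. assert (a < n /\ b < n /\ c < n /\ d < n /\ e < n)%nat by (repeat split; apply Hb; simpl; tauto).
    simpl. split; [|split; auto].
    + apply nodup_iff4; repeat split; edneq.
    + incl_pairs.
Qed.

Open Scope R_scope.

Lemma sort3 a b c : a <> b -> a <> c -> b <> c -> exists x y z, (x < y < z)%nat /\
  (forall t, t = x \/ t = y \/ t = z -> t = a \/ t = b \/ t = c).
Proof.
  intros. destruct (Nat.lt_total a b) as [h1|[h1|h1]]; [|lia|];
  destruct (Nat.lt_total a c) as [h2|[h2|h2]]; try lia;
  destruct (Nat.lt_total b c) as [h3|[h3|h3]]; try lia.
  all: first [ exists a, b, c; split; [lia| intros t Ht; lia]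
             | exists a, c, b; split; [lia| intros t Ht; lia]
             | exists b, a, c; split; [lia| intros t Ht; lia]
             | exists b, c, a; split; [lia| intros t Ht; lia]
             | exists c, a, b; split; [lia| intros t Ht; lia]
             | exists c, b, a; split; [lia| intros t Ht; lia] ].
Qed.

Lemma star_cover n S : incl S (pairs n) -> ~ NoStar S -> exists t, In t (stars n) /\ incl (Fstar t) S.
Proof.
  intros HS H. apply NNPP; intros Hn; apply H. intros v a b c Hd H1 H2 H3. apply Hn.
  apply nodup_iff3 in Hd. destruct Hd as (d1 & d2 & d3).
  destruct (sort3 a b c d1 d2 d3) as (x & y & z & Hxyz & Hp).
  assert (Hadj : forall t, t = x \/ t = y \/ t = z -> adj S v t /\ v <> t /\ (v < n)%nat /\ (t < n)%nat).
  { intros t Ht. destruct (Hp t Ht) as [ -> | [ -> | -> ] ]; split; auto; eapply adj_bounds; eauto. }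
  destruct (Hadj x ltac:(auto)) as (Ax & Nx & Vn & Xn).
  destruct (Hadj y ltac:(auto)) as (Ay & Ny & _ & Yn).
  destruct (Hadj z ltac:(auto)) as (Az & Nz & _ & Zn).
  exists [v;x;y;z]. split.
  - apply stars_in. exists v, x, y, z. repeat split; auto; lia.
  - intros e He; simpl in He. destruct He as [<-|[<-|[<-|[]]]]; eapply adj_edge; eauto.
Qed.

Lemma Fstar_props n t : In t (stars n) -> NoDup (Fstar t) /\ incl (Fstar t) (pairs n) /\ length (Fstar t) = 3%nat.
Proof.
  intros Ht. apply stars_in in Ht. destruct Ht as (v & x & y & z & -> & H1 & H2 & H3 & H4 & H5 & H6).
  simpl. split; [|split; auto].
  - apply nodup_iff3; repeat split; edneq.
  - incl_pairs.
Qed.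

Lemma nostar_decr : decr NoStar.
Proof. intros S T H HT v a b c Hd H1 H2 H3. apply (HT v a b c Hd); eapply adj_mono; eauto. Qed.

Lemma nobad_decr : decr (fun S => NoTri S /\ NoC4 S /\ NoP5 S).
Proof.
  intros S T H (h1 & h2 & h3). split; [|split].
  - intros a b c Hd H1 H2 H3; apply (h1 a b c Hd); eapply adj_mono; eauto.
  - intros a b c d Hd H1 H2 H3 H4; apply (h2 a b c d Hd); eapply adj_mono; eauto.
  - intros a b c d e Hd H1 H2 H3 H4; apply (h3 a b c d e Hd); eapply adj_mono; eauto.
Qed.

Lemma rprod_const {A} c (L : list A) : rprod (fun _ => c) L = c ^ length L.
Proof. induction L; simpl; auto. rewrite IHL; auto. Qed.

Lemma lower_chain n p : 0 <= p <= 1 ->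
  (1 - p^3) ^ length (stars n) * (1 - INR (n^3) * p^3 - INR (n^4) * p^4 - INR (n^5) * p^4)
  <= mu p (pairs n) (realizable_R1 n).
Proof.
  intros Hp.
  assert (H1 : mu p (pairs n) (fun S => NoStar S /\ (NoTri S /\ NoC4 S /\ NoP5 S)) <= mu p (pairs n) (realizable_R1 n)).
  { apply mu_mono_in; auto. intros S HS (h1 & h2 & h3 & h4). apply embed; auto.
    repeat split; auto. intros a b Hab; eapply adj_bounds; eauto. }
  eapply Rle_trans; [|apply H1].
  eapply Rle_trans; [|apply harris; auto; [apply nostar_decr|apply nobad_decr]].
  assert (H2 : (1 - p^3) ^ length (stars n) <= mu p (pairs n) NoStar).
  { eapply Rle_trans; [|apply (mu_mono_in p (pairs n) (fun S => forall t, In t (stars n) -> ~ incl (Fstar t) S))]; auto.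
    - eapply Rle_trans; [|apply prod_bound; auto].
      + rewrite <- rprod_const. apply Req_le. 
        assert (forall L, incl L (stars n) -> rprod (fun _ => 1 - p^3) L = rprod (fun t => 1 - mu p (pairs n) (fun S => incl (Fstar t) S)) L).
        { induction L as [|t L IH]; intros HL; cbn [rprod]; auto. rewrite IH by (intros u Hu; apply HL; right; auto).
          destruct (Fstar_props n t (HL t (or_introl eq_refl))) as (A & B & C). rewrite mu_edges, C; auto. }
        apply H. intros u Hu; auto.
      + intros t S T HST HS e He; apply HST, HS, He.
    - intros S HS H. apply NNPP; intros Hn. destruct (star_cover n S HS Hn) as (t & Ht & Hi).
      apply (H t Ht Hi). }
  assert (H3 : 1 - INR (n^3) * p^3 - INR (n^4) * p^4 - INR (n^5) * p^4 <=
               mu p (pairs n) (fun S => NoTri S /\ NoC4 S /\ NoP5 S)).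
  { pose proof (tri_bound n p Hp). pose proof (c4_bound n p Hp). pose proof (p5_bound n p Hp).
    pose proof (mu_compl p (pairs n) (fun S => NoTri S /\ NoC4 S /\ NoP5 S)).
    assert (mu p (pairs n) (fun S => ~ (NoTri S /\ NoC4 S /\ NoP5 S)) <=
      mu p (pairs n) (fun S => ~ NoTri S) + mu p (pairs n) (fun S => ~ NoC4 S) + mu p (pairs n) (fun S => ~ NoP5 S)).
    { eapply Rle_trans; [|apply Rplus_le_compat_r, mu_union; auto].
      eapply Rle_trans; [|apply mu_union; auto].
      apply mu_mono; auto. intros S h. apply NNPP; intros h'. apply h. split; [|split]; apply NNPP; tauto. }
    lra. }
  assert (0 <= (1 - p^3) ^ length (stars n)).
  { apply pow_le. assert (p^3 <= 1) by (rewrite <- (pow1 3); apply pow_incr; lra). lra. }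
  destruct (Rle_dec 0 (1 - INR (n^3) * p^3 - INR (n^4) * p^4 - INR (n^5) * p^4)).
  - apply Rmult_le_compat; auto.
  - pose proof (mu_bounds p (pairs n) NoStar Hp). pose proof (mu_bounds p (pairs n) (fun S => NoTri S /\ NoC4 S /\ NoP5 S) Hp).
    assert (0 <= mu p (pairs n) NoStar * mu p (pairs n) (fun S => NoTri S /\ NoC4 S /\ NoP5 S)) by nra. nra.
Qed.

Lemma real_nostar n S : incl S (pairs n) -> realizable_R1 n S -> NoStar S.
Proof.
  intros HS (f & Hinj & He) v a b c Hd H1 H2 H3.
  apply nodup_iff3 in Hd. destruct Hd as (d1 & d2 & d3).
  assert (Hd : forall t, adj S v t -> (t < n)%nat /\ (v < n)%nat /\ Rabs (f v - f t) = 1).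
  { intros t [h|h]; pose proof (HS _ h) as h'; apply in_pairs in h'; split; try lia; split; try lia.
    - apply (He _ h).
    - rewrite Rabs_minus_sym. apply (He _ h). }
  destruct (Hd a H1) as (Ha & Hv & Fa). destruct (Hd b H2) as (Hb & _ & Fb). destruct (Hd c H3) as (Hc & _ & Fc).
  assert (forall t, Rabs (f v - f t) = 1 -> f t = f v - 1 \/ f t = f v + 1).
  { intros t Ht. unfold Rabs in Ht. destruct (Rcase_abs (f v - f t)); [right|left]; lra. }
  destruct (H a Fa), (H b Fb), (H c Fc);
  first [ apply d1; apply Hinj; auto; lra | apply d2; apply Hinj; auto; lra | apply d3; apply Hinj; auto; lra ].
Qed.

Lemma upper_chain n p : 0 <= p <= 1 ->
  mu p (pairs n) (realizable_R1 n) <= exp (jsum p (pairs n) Fstar (stars n)).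
Proof.
  intros Hp. eapply Rle_trans; [|apply janson; auto].
  apply mu_mono_in; auto. intros S HS HR t Ht Hi.
  destruct (proj1 (stars_in n t) Ht) as (v & x & y & z & -> & H1 & H2 & H3 & H4 & H5 & H6).
  apply (real_nostar n S HS HR v x y z).
  - apply nodup_iff3; lia.
  - apply edge_adj, Hi; simpl; auto.
  - apply edge_adj, Hi; simpl; auto.
  - apply edge_adj, Hi; simpl; auto.
Qed.

Open Scope R_scope.

Definition psi (V : list nat) (x : nat) : R := if in_dec Nat.eq_dec x V then 1 else 0.
Definition phi (V : list nat) (p : R) (x : nat) : R := if in_dec Nat.eq_dec x V then 1 else p.
Definition outs (V : list nat) (L : list nat) := filter (fun t => if in_dec Nat.eq_dec t V then false else true) L.

Definition gfun (V : list nat) (p : R) (j : list nat) : R :=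
  match j with
  | [w;x;y;z] => psi V w * (p^4 * rprod (psi V) [x;y;z] + p^3 * (rprod (phi V p) [x;y;z] - rprod (psi V) [x;y;z]))
  | _ => 0
  end.

Lemma rprod_phi V p L : rprod (phi V p) L = p ^ length (outs V L).
Proof.
  induction L as [|t L IH]; [reflexivity|]. unfold outs in *. cbn [rprod filter]. unfold phi at 1.
  destruct (in_dec Nat.eq_dec t V); cbn [length]; rewrite IH; [ring|]. rewrite <- tech_pow_Rmult; ring.
Qed.

Lemma rprod_psi V L : rprod (psi V) L = if outs V L then 1 else 0.
Proof.
  induction L as [|t L IH]; [reflexivity|]. unfold outs in *. cbn [rprod filter]. unfold psi at 1.
  destruct (in_dec Nat.eq_dec t V); rewrite IH.
  - destruct (filter _ L); ring.
  - ring.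
Qed.

Lemma outs_in V L t : In t (outs V L) <-> In t L /\ ~ In t V.
Proof. unfold outs. rewrite filter_In. destruct (in_dec Nat.eq_dec t V); intuition; discriminate. Qed.

Lemma gfun_nonneg V p j : 0 <= p <= 1 -> 0 <= gfun V p j.
Proof.
  intros Hp. destruct j as [|w [|x [|y [|z [|]]]]]; cbn [gfun]; try lra.
  assert (0 <= psi V w) by (unfold psi; destruct in_dec; lra).
  apply Rmult_le_pos; auto.
  rewrite rprod_phi, rprod_psi. destruct (outs V [x;y;z]) as [|o l].
  - assert (0 <= p^4) by (apply pow_le; lra). cbn [length pow]. nra.
  - assert (0 <= p^3) by (apply pow_le; lra). assert (0 <= p ^ length (o :: l)) by (apply pow_le; lra).
    assert (0 <= p ^ 3 * (p ^ length (o :: l) - 0)) by (rewrite Rminus_0_r; apply Rmult_le_pos; auto). lra.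
Qed.

Lemma mu_and_incl n p F G H : 0 <= p <= 1 -> NoDup H -> incl H (F ++ G) -> incl H (pairs n) ->
  mu p (pairs n) (fun S => incl F S /\ incl G S) <= p ^ length H.
Proof.
  intros Hp N I1 I2. rewrite <- (mu_edges n p H); auto. apply mu_mono; auto.
  intros S [h1 h2] e He. apply I1 in He. apply in_app_or in He. destruct He; auto.
Qed.

Lemma star_edge_V v a b c w t : edge w t = edge v a \/ edge w t = edge v b \/ edge w t = edge v c ->
  In w [v;a;b;c] /\ In t [v;a;b;c].
Proof.
  intros [h|[h|h]]; apply edge_eq in h; simpl; intuition.
Qed.

Lemma key_pair n p i j : 0 <= p <= 1 -> In i (stars n) -> In j (stars n) -> i <> j ->
  share Fstar i j ->
  mu p (pairs n) (fun S => incl (Fstar i) S /\ incl (Fstar j) S) <= gfun i p j.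
Proof.
  intros Hp Hi Hj Hij Hs.
  pose proof (Fstar_props n i Hi) as (NFi & IFi & LFi).
  destruct (proj1 (stars_in n i) Hi) as (v & a & b & c & -> & Hv & Habc & Hcn & Hva & Hvb & Hvc).
  destruct (proj1 (stars_in n j) Hj) as (w & x & y & z & -> & Hw & Hxyz & Hzn & Hwx & Hwy & Hwz).
  set (V := [v;a;b;c]) in *.
  assert (HwV : In w V).
  { destruct Hs as (e & He1 & He2). simpl in He1, He2.
    destruct He2 as [<-|[<-|[<-|[]]]]; 
    (destruct He1 as [h|[h|[h|[]]]]; symmetry in h; first [eapply proj1; apply (star_edge_V v a b c w x); tauto | eapply proj1; apply (star_edge_V v a b c w y); tauto | eapply proj1; apply (star_edge_V v a b c w z); tauto]). }
  assert (Hpw : psi V w = 1) by (unfold psi; destruct in_dec; [auto|contradiction]).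
  cbn [gfun]. rewrite Hpw, rprod_phi, rprod_psi.
  assert (Hout : forall t, ~ In t V -> ~ In (edge w t) (Fstar V)).
  { intros t Ht He. simpl in He. apply Ht.
    assert (edge w t = edge v a \/ edge w t = edge v b \/ edge w t = edge v c) by (destruct He as [h|[h|[h|[]]]]; auto).
    apply (star_edge_V v a b c w t); auto. }
  set (O := outs V [x;y;z]).
  assert (HOsub : forall t, In t O -> In t [x;y;z] /\ ~ In t V) by (intros t; apply outs_in).
  assert (HGnd : NoDup (Fstar V ++ map (edge w) O)).
  { apply NoDup_app; auto.
    - apply NoDup_map_NoDup_ForallPairs.
      + intros t1 t2 H1 H2 He. apply edge_eq in He. destruct (HOsub t1 H1) as [A _]. destruct (HOsub t2 H2) as [B _].
        simpl in A, B. destruct He as [[_ ?]|[? ?]]; auto. exfalso; intuition lia.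
      + apply NoDup_filter. apply nodup_iff3; lia.
    - intros e He1 He2. apply in_map_iff in He2. destruct He2 as (t & <- & Ht).
      destruct (HOsub t Ht) as [_ Ht']. apply (Hout t Ht' He1). }
  assert (HGincl : incl (Fstar V ++ map (edge w) O) (Fstar V ++ Fstar [w;x;y;z])).
  { intros e He. apply in_app_or in He. apply in_or_app. destruct He as [He|He]; auto. right.
    apply in_map_iff in He. destruct He as (t & <- & Ht). destruct (HOsub t Ht) as [Ht' _].
    simpl in Ht'. simpl. intuition (subst; auto). }
  assert (HGpairs : incl (Fstar V ++ map (edge w) O) (pairs n)).
  { intros e He. apply in_app_or in He. destruct He as [He|He]; auto.
    apply in_map_iff in He. destruct He as (t & <- & Ht). destruct (HOsub t Ht) as [Ht' _].
    simpl in Ht'. apply edge_in_pairs; intuition lia. }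
  pose proof (mu_and_incl n p _ _ _ Hp HGnd HGincl HGpairs) as HB.
  rewrite length_app, length_map, LFi in HB. fold O.
  destruct O as [|o O'] eqn:EO.
  - (* all leaves in V: need an extra edge *)
    simpl length. assert (Hall : forall t, In t [x;y;z] -> In t V).
    { intros t Ht. apply NNPP; intros Hn. assert (In t O) by (apply outs_in; auto). rewrite EO in H; destruct H. }
    assert (HxV := Hall x ltac:(simpl; auto)). assert (HyV := Hall y ltac:(simpl; auto)).
    assert (HzV := Hall z ltac:(simpl; auto)).
    destruct (Nat.eq_dec w v) as [->|Hwv].
    + exfalso. apply Hij. unfold V in *. simpl in HxV, HyV, HzV.
      destruct HxV as [?|[?|[?|[?|[]]]]]; destruct HyV as [?|[?|[?|[?|[]]]]]; destruct HzV as [?|[?|[?|[?|[]]]]];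
      subst; try lia; f_equal; f_equal; try lia; f_equal; try lia; f_equal; lia.
    + set (t := if Nat.eq_dec x v then y else x).
      assert (Htv : t <> v) by (unfold t; destruct (Nat.eq_dec x v); lia).
      assert (Htj : t = x \/ t = y) by (unfold t; destruct (Nat.eq_dec x v); auto).
      assert (Hnd : NoDup (Fstar V ++ [edge w t])).
      { apply NoDup_app; auto; [repeat constructor; intros []|].
        intros e He [<-|[]]. simpl in He. 
        destruct He as [h|[h|[h|[]]]]; apply edge_eq in h; lia. }
      assert (Hinc : incl (Fstar V ++ [edge w t]) (Fstar V ++ Fstar [w;x;y;z])).
      { intros e He. apply in_app_or in He. apply in_or_app. destruct He as [He|[<-|[]]]; auto.
        right; simpl. destruct Htj as [-> | ->]; auto. }
      assert (Hpr : incl (Fstar V ++ [edge w t]) (pairs n)).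
      { intros e He. apply in_app_or in He. destruct He as [He|[<-|[]]]; auto.
        apply edge_in_pairs; destruct Htj; lia. }
      pose proof (mu_and_incl n p _ _ _ Hp Hnd Hinc Hpr) as HB2.
      rewrite length_app, LFi in HB2. simpl in HB2. simpl. lra.
  - cbn iota. rewrite pow_add in HB. lra.
Qed.

Open Scope R_scope.

Lemma rsum_tup (f : list nat -> R) k n :
  rsum f (tup (S k) n) = rsum (fun t => rsum (fun x => f (x :: t)) (seq 0 n)) (tup k n).
Proof. simpl. rewrite rsum_flat_map. apply rsum_ext; intros t _. rewrite rsum_map; auto. Qed.

Lemma rsum_ind a L : NoDup L -> rsum (fun x => if Nat.eq_dec x a then 1 else 0) L = if in_dec Nat.eq_dec a L then 1 else 0.
Proof.
  induction L as [|y L IH]; intros ND; simpl; auto. inversion ND; subst. rewrite IH by auto.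
  destruct (in_dec Nat.eq_dec a (y :: L)) as [h1|h1]; destruct (Nat.eq_dec y a) as [h2|h2];
  destruct (in_dec Nat.eq_dec a L) as [h3|h3]; simpl in h1; subst; try lra; exfalso; intuition.
Qed.

Lemma rsum_psi n v a b c : NoDup [v;a;b;c] -> (v < n)%nat -> (a < n)%nat -> (b < n)%nat -> (c < n)%nat ->
  rsum (psi [v;a;b;c]) (seq 0 n) = 4.
Proof.
  intros ND H1 H2 H3 H4. apply nodup_iff4 in ND.
  rewrite (rsum_ext _ (fun x => (if Nat.eq_dec x v then 1 else 0) + (if Nat.eq_dec x a then 1 else 0) +
      (if Nat.eq_dec x b then 1 else 0) + (if Nat.eq_dec x c then 1 else 0))).
  - rewrite !rsum_plus, !rsum_ind by apply seq_NoDup.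
    repeat (destruct (in_dec Nat.eq_dec _ (seq 0 n)) as [|h]; [|exfalso; apply h, in_seq; lia]). lra.
  - intros x _. unfold psi. destruct (in_dec Nat.eq_dec x [v;a;b;c]) as [h|h]; simpl in h;
    repeat destruct (Nat.eq_dec x _); subst; try lra; intuition lia.
Qed.

Lemma rsum_phi n p V : rsum (phi V p) (seq 0 n) = rsum (psi V) (seq 0 n) + p * (INR n - rsum (psi V) (seq 0 n)).
Proof.
  rewrite (rsum_ext _ (fun x => (1 - p) * psi V x + p * 1)).
  - rewrite rsum_plus, !rsum_scal, rsum_const, length_seq. ring.
  - intros x _. unfold phi, psi. destruct in_dec; ring.
Qed.

Lemma rsum_mul_r {A} (f : A -> R) c L : rsum (fun a => f a * c) L = rsum f L * c.
Proof. rewrite (rsum_ext _ (fun a => c * f a)) by (intros; ring). rewrite rsum_scal; ring. Qed.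

Lemma sum_gfun n p V : rsum (gfun V p) (tup 4 n) =
  rsum (psi V) (seq 0 n) * ((p^4 - p^3) * (rsum (psi V) (seq 0 n))^3 + p^3 * (rsum (phi V p) (seq 0 n))^3).
Proof.
  rewrite !rsum_tup. cbn [tup]. cbn [rsum]. rewrite Rplus_0_r.
  set (L := seq 0 n). set (A := rsum (psi V) L). set (B := rsum (phi V p) L).
  transitivity (rsum (fun z => rsum (fun y => rsum (fun x => A * ((p^4 - p^3) * psi V x * psi V y * psi V z
      + p^3 * phi V p x * phi V p y * phi V p z)) L) L) L).
  - apply rsum_ext; intros z _. apply rsum_ext; intros y _. apply rsum_ext; intros x _.
    cbn [gfun rprod]. unfold A. rewrite <- rsum_mul_r. apply rsum_ext; intros w _. ring.
  - transitivity (rsum (fun z => rsum (fun y => A * ((p^4-p^3) * A * psi V y * psi V z + p^3 * B * phi V p y * phi V p z)) L) L).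
    { apply rsum_ext; intros z _. apply rsum_ext; intros y _.
      rewrite (rsum_ext _ (fun x => (A * (p^4-p^3) * psi V y * psi V z) * psi V x + (A * p^3 * phi V p y * phi V p z) * phi V p x))
        by (intros; ring).
      rewrite rsum_plus, !rsum_scal. fold A B. ring. }
    transitivity (rsum (fun z => A * ((p^4-p^3) * A * A * psi V z + p^3 * B * B * phi V p z)) L).
    { apply rsum_ext; intros z _.
      rewrite (rsum_ext _ (fun y => (A * (p^4-p^3) * A * psi V z) * psi V y + (A * p^3 * B * phi V p z) * phi V p y))
        by (intros; ring).
      rewrite rsum_plus, !rsum_scal. fold A B. ring. }
    rewrite (rsum_ext _ (fun z => (A * (p^4-p^3) * A * A) * psi V z + (A * p^3 * B * B) * phi V p z))
      by (intros; ring).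
    rewrite rsum_plus, !rsum_scal. fold A B. ring.
Qed.

Definition Dn (n : nat) (p : R) := 4 * ((p^4 - p^3) * 64 + p^3 * (4 + p * (INR n - 4))^3).

Lemma stars_tup n t : In t (stars n) -> In t (tup 4 n).
Proof.
  intros Ht. destruct (proj1 (stars_in n t) Ht) as (v & x & y & z & -> & H1 & H2 & H3 & _).
  apply tup_in; auto. intros u Hu; simpl in Hu; intuition lia.
Qed.

Lemma sum_gfun_star n p i : In i (stars n) -> rsum (gfun i p) (tup 4 n) = Dn n p.
Proof.
  intros Hi. rewrite sum_gfun, rsum_phi.
  destruct (proj1 (stars_in n i) Hi) as (v & x & y & z & -> & H1 & H2 & H3 & H4 & H5 & H6).
  rewrite rsum_psi; try lia. unfold Dn. ring.
  apply nodup_iff4; lia.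
Qed.

Lemma dsum_le n p i rest : 0 <= p <= 1 -> In i (stars n) -> incl rest (stars n) -> NoDup (i :: rest) ->
  dsum p (pairs n) Fstar i rest <= Dn n p.
Proof.
  intros Hp Hi Hr ND. inversion ND; subst. rewrite <- (sum_gfun_star n p i Hi).
  eapply Rle_trans; [|apply rsum_incl; auto].
  - unfold dsum. apply rsum_le. intros u Hu.
    destruct (excluded_middle_informative (share Fstar i u)).
    + apply key_pair; auto. intros <-; contradiction.
    + apply gfun_nonneg; auto.
  - auto.
  - intros u Hu; apply stars_tup, Hr, Hu.
  - intros u _; apply gfun_nonneg; auto.
Qed.

Lemma jsum_le n p L : 0 <= p <= 1 -> NoDup L -> incl L (stars n) ->
  jsum p (pairs n) Fstar L <= INR (length L) * (Dn n p - p^3).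
Proof.
  intros Hp. induction L as [|t L IH]; intros ND HL; simpl jsum; [simpl; lra|].
  inversion ND; subst.
  assert (Ht : In t (stars n)) by (apply HL; left; auto).
  destruct (Fstar_props n t Ht) as (A & B & C).
  rewrite mu_edges, C by auto.
  pose proof (dsum_le n p t L Hp Ht (fun u Hu => HL u (or_intror Hu)) ND).
  pose proof (IH H2 (fun u Hu => HL u (or_intror Hu))).
  rewrite length_cons, S_INR. lra.
Qed.

Open Scope R_scope.

Lemma exp_pow_nat y N : exp (INR N * y) = exp y ^ N.
Proof. induction N; [simpl; rewrite Rmult_0_l, exp_0; auto|]. rewrite S_INR, Rmult_plus_distr_r, exp_plus, IHN. rewrite Rmult_1_l. simpl. ring. Qed.

Lemma one_minus_exp x : 0 <= x < 1 -> exp (- (x / (1 - x))) <= 1 - x.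
Proof.
  intros Hx. pose proof (exp_ineq1_le (x / (1 - x))).
  assert (1 + x / (1 - x) = / (1 - x)) by (field; lra).
  rewrite exp_Ropp. rewrite H0 in H.
  replace (1 - x) with (/ / (1 - x)) at 2 by (field; lra).
  apply Rinv_le_contravar; auto. apply Rinv_0_lt_compat; lra.
Qed.

Lemma pow_lower x N : 0 <= x < 1 -> exp (- (INR N * (x / (1 - x)))) <= (1 - x) ^ N.
Proof.
  intros Hx. replace (- (INR N * (x / (1 - x)))) with (INR N * (- (x / (1 - x)))) by ring.
  rewrite exp_pow_nat. apply pow_incr. split; [left; apply exp_pos| apply one_minus_exp; auto].
Qed.

Lemma div_pow_le K T k : 0 <= K -> 1 <= T -> (1 <= k)%nat -> K / T ^ k <= K / T.
Proof.
  intros HK HT Hk. unfold Rdiv. apply Rmult_le_compat_l; auto.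
  apply Rinv_le_contravar; [lra|]. replace T with (T ^ 1) at 1 by ring. apply Rle_pow; auto.
Qed.

Lemma ln2_pos : 0 < ln 2.
Proof. pose proof ln_lt_2. lra. Qed.

Definition Mlo (a : R) :=
  let lam := a^3 / 6 in let del := ln 2 - lam in let bet := 1 - exp (- (del / 2)) in
  1 + a + 2 * a^3 + a^3 * (4 * lam + 1) / del + (a^3 + 2 * a^4) / bet.

Lemma lower_num a T (N : nat) : 0 < a -> a^3 / 6 < ln 2 -> 1 <= T -> Mlo a < T ->
  INR N <= (T^3)^4 / 6 ->
  1/2 < exp (- (INR N * ((a / T^4)^3 / (1 - (a / T^4)^3)))) *
        (1 - (T^3)^3 * (a / T^4)^3 - (T^3)^4 * (a / T^4)^4 - (T^3)^5 * (a / T^4)^4).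
Proof.
  intros Ha Hl HT HM HN. unfold Mlo in HM.
  set (lam := a^3/6) in *. set (del := ln 2 - lam) in *. set (bet := 1 - exp (- (del / 2))) in *.
  assert (Hdel : 0 < del) by (unfold del; lra).
  assert (Hbet : 0 < bet).
  { unfold bet. assert (exp (- (del/2)) < exp 0) by (apply exp_increasing; lra). rewrite exp_0 in H. lra. }
  assert (Hlam : 0 < lam) by (unfold lam; assert (0 < a^3) by (apply pow_lt; lra); lra).
  assert (Ha3 : 0 < a^3) by (apply pow_lt; lra).
  assert (Ha4 : 0 < a^4) by (apply pow_lt; lra).
  assert (HT0 : 0 < T) by lra.
  assert (Ht1 : 0 <= a^3 * (4 * lam + 1) / del) by (apply Rmult_le_pos; [nra| left; apply Rinv_0_lt_compat; lra]).
  assert (Ht2 : 0 <= (a^3 + 2 * a^4) / bet) by (apply Rmult_le_pos; [nra| left; apply Rinv_0_lt_compat; lra]).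
  set (x := (a / T^4)^3).
  assert (Hx : x = a^3 / T^12) by (unfold x; field; lra).
  assert (Hx0 : 0 <= x) by (rewrite Hx; apply Rmult_le_pos; [lra| left; apply Rinv_0_lt_compat, pow_lt; lra]).
  assert (Hxu : x <= a^3 / T) by (rewrite Hx; apply div_pow_le; lia || lra).
  assert (HaT : a^3 / T <= 1/2).
  { apply (Rmult_le_reg_r T); [lra|]. unfold Rdiv. rewrite Rmult_assoc, Rinv_l by lra. lra. }
  assert (HaT2 : a^3 / T <= del / (4 * lam + 1)).
  { apply (Rmult_le_reg_r (T * (4 * lam + 1))); [nra|].
    replace (a^3 / T * (T * (4 * lam + 1))) with (a^3 * (4*lam+1)) by (field; lra).
    replace (del / (4 * lam + 1) * (T * (4 * lam + 1))) with (del * T) by (field; lra).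
    assert (a ^ 3 * (4 * lam + 1) / del < T) by lra.
    apply (Rmult_lt_compat_r del) in H; auto. unfold Rdiv in H. rewrite Rmult_assoc, Rinv_l in H by lra. lra. }
  assert (HNx : INR N * x <= lam).
  { rewrite Hx. replace lam with ((T^3)^4 / 6 * (a^3 / T^12)) by (unfold lam; field; lra).
    apply Rmult_le_compat_r; auto. rewrite <- Hx; auto. }
  assert (HN0 : 0 <= INR N) by apply pos_INR.
  assert (Hexp : INR N * (x / (1 - x)) <= lam + del / 2).
  { assert (x / (1 - x) <= x * (1 + 2 * x)).
    { apply (Rmult_le_reg_r (1 - x)); [lra|]. unfold Rdiv. rewrite Rmult_assoc, Rinv_l by lra. nra. }
    assert (INR N * (x / (1-x)) <= INR N * (x * (1 + 2*x))) by (apply Rmult_le_compat_l; auto).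
    assert (2 * x * lam <= del / 2).
    { assert (x <= del / (4 * lam + 1)) by lra.
      assert (x * (4 * lam + 1) <= del).
      { apply (Rmult_le_compat_r (4*lam+1)) in H1; [|lra]. unfold Rdiv in H1.
        rewrite Rmult_assoc, Rinv_l in H1 by lra. lra. }
      nra. }
    nra. }
  assert (HB : (T^3)^3 * (a / T^4)^3 + (T^3)^4 * (a / T^4)^4 + (T^3)^5 * (a / T^4)^4 < bet).
  { replace ((T^3)^3 * (a / T^4)^3 + (T^3)^4 * (a / T^4)^4 + (T^3)^5 * (a / T^4)^4)
      with (a^3 / T^3 + a^4 / T^4 + a^4 / T) by (field; lra).
    assert (a^3 / T^3 <= a^3 / T) by (apply div_pow_le; lia || lra).
    assert (a^4 / T^4 <= a^4 / T) by (apply div_pow_le; lia || lra).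
    assert ((a^3 + 2 * a^4) / T < bet).
    { apply (Rmult_lt_reg_r T); [lra|]. unfold Rdiv. rewrite Rmult_assoc, Rinv_l by lra.
      assert ((a ^ 3 + 2 * a ^ 4) / bet < T) by lra.
      apply (Rmult_lt_compat_r bet) in H1; auto. unfold Rdiv in H1. rewrite Rmult_assoc, Rinv_l in H1 by lra. lra. }
    unfold Rdiv in *. lra. }
  assert (E1 : exp (- (lam + del / 2)) <= exp (- (INR N * (x / (1 - x))))).
  { destruct (Req_dec (lam + del/2) (INR N * (x / (1 - x)))) as [e|e]; [rewrite e; lra|].
    left. apply exp_increasing. lra. }
  assert (E2 : exp (- (lam + del / 2)) * exp (- (del / 2)) = / 2).
  { rewrite <- exp_plus. replace (- (lam + del / 2) + - (del / 2)) with (- ln 2) by (unfold del; lra).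
    rewrite exp_Ropp, exp_ln; [auto|lra]. }
  assert (E3 : exp (- (del / 2)) < 1 - ((T^3)^3 * (a / T^4)^3 + (T^3)^4 * (a / T^4)^4 + (T^3)^5 * (a / T^4)^4))
    by (unfold bet in HB; lra).
  pose proof (exp_pos (- (lam + del / 2))). pose proof (exp_pos (- (del / 2))).
  assert (exp (- (lam + del / 2)) * exp (- (del / 2)) <
          exp (- (INR N * (x / (1 - x)))) * (1 - ((T^3)^3 * (a / T^4)^3 + (T^3)^4 * (a / T^4)^4 + (T^3)^5 * (a / T^4)^4))).
  { pose proof (exp_pos (- (INR N * (x / (1 - x))))). nra. }
  unfold x in *. replace (1 - (T^3)^3 * (a / T^4)^3 - (T^3)^4 * (a / T^4)^4 - (T^3)^5 * (a / T^4)^4) with (1 - ((T^3)^3 * (a / T^4)^3 + (T^3)^4 * (a / T^4)^4 + (T^3)^5 * (a / T^4)^4)) by ring. lra.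
Qed.

Definition Mhi (b : R) :=
  let lam := b^3 / 6 in let eta := lam - ln 2 in let K := 112 * b + 12 * b^2 + b^3 in
  2 + (4 * lam * K + 6 * lam) / eta.

Lemma upper_num b T (N : nat) : 0 < b -> ln 2 < b^3 / 6 -> Mhi b <= T -> 
  (T^3)^4 - 6 * (T^3)^3 <= 6 * INR N -> INR N <= (T^3)^4 / 6 ->
  INR N * (4 * (((b / T^4)^4 - (b / T^4)^3) * 64 + (b / T^4)^3 * (4 + (b / T^4) * (T^3 - 4))^3) - (b / T^4)^3)
    <= - ln 2.
Proof.
  intros Hb Hl HM HN1 HN2. unfold Mhi in HM.
  set (lam := b^3/6) in *. set (eta := lam - ln 2) in *. set (K := 112 * b + 12 * b^2 + b^3) in *.
  assert (Heta : 0 < eta) by (unfold eta; lra).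
  assert (Hb3 : 0 < b^3) by (apply pow_lt; lra).
  assert (Hlam : 0 < lam) by (unfold lam; lra).
  assert (HK : 0 < K) by (unfold K; assert (0 < b^2) by (apply pow_lt; lra); lra).
  assert (Hfrac : 0 <= (4 * lam * K + 6 * lam) / eta) by (apply Rmult_le_pos; [nra|left; apply Rinv_0_lt_compat; lra]).
  assert (HT : 2 <= T) by lra. assert (HT0 : 0 < T) by lra.
  set (p := b / T^4).
  assert (Hp0 : 0 <= p) by (unfold p; apply Rmult_le_pos; [lra| left; apply Rinv_0_lt_compat, pow_lt; lra]).
  assert (Hpb : p <= b / T) by (unfold p; apply div_pow_le; lia || lra).
  assert (Hpn : p * T^3 = b / T) by (unfold p; field; lra).
  set (q := p * (T^3 - 4)).
  assert (HT3 : 8 <= T^3) by (replace 8 with (2^3) by ring; apply pow_incr; lra).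
  assert (Hq0 : 0 <= q) by (unfold q; apply Rmult_le_pos; lra).
  assert (Hqb : q <= b / T) by (unfold q; rewrite <- Hpn; nra).
  assert (HbT : 0 <= b / T) by (apply Rmult_le_pos; [lra| left; apply Rinv_0_lt_compat; lra]).
  assert (HbT1 : b / T * T = b) by (field; lra).
  assert (Hcube : (4 + q)^3 - 64 <= 48 * (b/T) + 12 * (b/T)^2 + (b/T)^3).
  { replace ((4 + q)^3 - 64) with (48 * q + 12 * q^2 + q^3) by ring.
    assert (q^2 <= (b/T)^2) by (apply pow_incr; lra). assert (q^3 <= (b/T)^3) by (apply pow_incr; lra). lra. }
  assert (Hsmall : 64 * p + 48 * (b/T) + 12 * (b/T)^2 + (b/T)^3 <= K / T).
  { assert ((b/T)^2 <= b^2 / T) by (replace ((b/T)^2) with (b^2 / T^2) by (field; lra); apply div_pow_le; lia || nra).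
    assert ((b/T)^3 <= b^3 / T) by (replace ((b/T)^3) with (b^3 / T^3) by (field; lra); apply div_pow_le; lia || nra).
    unfold K. unfold Rdiv in *. lra. }
  set (mu := INR N * p^3).
  assert (Hp3 : p^3 = b^3 / T^12) by (unfold p; field; lra).
  assert (HT12 : 0 < T^12) by (apply pow_lt; lra).
  assert (Hmu1 : mu <= lam).
  { unfold mu. rewrite Hp3. replace lam with ((T^3)^4 / 6 * (b^3 / T^12)) by (unfold lam; field; lra).
    apply Rmult_le_compat_r; auto. left; apply Rmult_lt_0_compat; auto. apply Rinv_0_lt_compat; auto. }
  assert (Hmu2 : lam - 6 * lam / T <= mu).
  { unfold mu. rewrite Hp3.
    assert (lam - 6 * lam / T^3 <= INR N * (b ^ 3 / T ^ 12)).
    { replace (lam - 6 * lam / T^3) with (((T^3)^4 - 6 * (T^3)^3) / 6 * (b^3 / T^12)) by (unfold lam; field; lra).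
      apply Rmult_le_compat_r; [left; apply Rmult_lt_0_compat; auto; apply Rinv_0_lt_compat; auto|lra]. }
    assert (6 * lam / T^3 <= 6 * lam / T) by (apply div_pow_le; lia || lra). lra. }
  assert (Hmu0 : 0 <= mu) by (unfold mu; apply Rmult_le_pos; [apply pos_INR| apply pow_le; auto]).
  assert (HD : INR N * (4 * ((p^4 - p^3) * 64 + p^3 * (4 + q)^3)) <= 4 * mu * (K / T)).
  { replace (INR N * (4 * ((p^4 - p^3) * 64 + p^3 * (4 + q)^3))) with (4 * mu * (64 * p + ((4 + q)^3 - 64)))
      by (unfold mu; ring).
    apply Rmult_le_compat_l; [lra|]. lra. }
  assert (HKT : 0 <= K / T) by (apply Rmult_le_pos; [lra| left; apply Rinv_0_lt_compat; lra]).
  assert (4 * mu * (K / T) <= 4 * lam * (K / T)) by (apply Rmult_le_compat_r; auto; lra).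
  assert (Hfin : 4 * lam * (K / T) + 6 * lam / T <= eta).
  { replace (4 * lam * (K / T) + 6 * lam / T) with ((4 * lam * K + 6 * lam) / T) by (field; lra).
    apply (Rmult_le_reg_r T); [lra|]. unfold Rdiv. rewrite Rmult_assoc, Rinv_l by lra.
    assert ((4 * lam * K + 6 * lam) / eta <= T) by lra.
    apply (Rmult_le_compat_r eta) in H0; [|lra]. unfold Rdiv in H0. rewrite Rmult_assoc, Rinv_l in H0 by lra. lra. }
  fold q. replace (INR N * (4 * ((p ^ 4 - p ^ 3) * 64 + p ^ 3 * (4 + q) ^ 3) - p ^ 3))
    with (INR N * (4 * ((p ^ 4 - p ^ 3) * 64 + p ^ 3 * (4 + q) ^ 3)) - mu) by (unfold mu; ring).
  unfold eta in Hfin. lra.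
Qed.

Open Scope R_scope.

Lemma mu_zero {E} (l : list E) A : mu 0 l A = if excluded_middle_informative (A []) then 1 else 0.
Proof.
  induction l as [|x l IH] in A |- *; simpl; auto. rewrite IH. ring.
Qed.

Lemma real_decr n : decr (realizable_R1 n).
Proof. intros S T H (f & H1 & H2). exists f. split; auto. Qed.

Lemma real_nil n : realizable_R1 n [].
Proof. exists INR. split; [intros i j _ _ H; apply INR_eq; auto| intros e []]. Qed.

Lemma N_real n : (4 <= n)%nat ->
  6 * INR (length (stars n)) = INR n * (INR n - 1) * (INR n - 2) * (INR n - 3).
Proof.
  intros Hn. pose proof (stars_length n) as H. apply (f_equal INR) in H.
  rewrite !mult_INR in H. rewrite !minus_INR in H by lia.
  replace (INR 6) with 6 in H by (simpl; ring). replace (INR 1) with 1 in H by (simpl; ring).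
  replace (INR 2) with 2 in H by (simpl; ring). replace (INR 3) with 3 in H by (simpl; ring). lra.
Qed.

Lemma Rpower_cube x : 0 < x -> (Rpower x (1/3)) ^ 3 = x.
Proof.
  intros Hx. rewrite <- Rpower_pow by (unfold Rpower; apply exp_pos).
  rewrite Rpower_mult. replace (1 / 3 * INR 3) with 1 by (simpl; field). apply Rpower_1; auto.
Qed.

Lemma Rpower_43 x : 0 < x -> Rpower x (4/3) = (Rpower x (1/3)) ^ 4.
Proof.
  intros Hx. rewrite <- Rpower_pow by (unfold Rpower; apply exp_pos).
  rewrite Rpower_mult. f_equal. simpl; field.
Qed.

Lemma cube_lt x y : 0 <= x -> x < y -> x^3 < y^3.
Proof. intros. assert (0 < y - x) by lra. assert (0 <= x * y) by nra.
  replace (y^3 - x^3) with ((y - x) * (x^2 + x*y + y^2)) by ring. assert (0 < y^2) by nra. nra. Qed.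

Lemma exp_mono x y : x <= y -> exp x <= exp y.
Proof. intros [h|h]; [left; apply exp_increasing; auto| rewrite h; lra]. Qed.

Theorem mainTheorem6 :
  forall eps : R, eps > 0 ->
  exists n0 : nat, forall n : nat, (n >= n0)%nat ->
    exists s : R, is_lub (pstar_set n) s /\
      (Rpower (6 * ln 2) (1 / 3) - eps) / Rpower (INR n) (4 / 3) <= s /\
      s <= (Rpower (6 * ln 2) (1 / 3) + eps) / Rpower (INR n) (4 / 3).
Proof.
  intros eps He.
  set (c := Rpower (6 * ln 2) (1 / 3)).
  assert (Hl2 := ln2_pos).
  assert (Hc : 0 < c) by (unfold c, Rpower; apply exp_pos).
  assert (Hc3 : c ^ 3 = 6 * ln 2) by (unfold c; apply Rpower_cube; lra).
  set (a := c - eps). set (b := c + eps).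
  assert (Hb : 0 < b) by (unfold b; lra).
  assert (Hb3 : ln 2 < b^3 / 6).
  { assert (c^3 < b^3) by (apply cube_lt; unfold b; lra). lra. }
  set (M0 := 2 + Rabs (Mhi b) + Rabs (Mlo a) + Rabs a).
  assert (HM0 : 2 <= M0) by (unfold M0; pose proof (Rabs_pos (Mhi b)); pose proof (Rabs_pos (Mlo a)); pose proof (Rabs_pos a); lra).
  destruct (INR_unbounded (M0^3)) as [n0 Hn0]. exists n0. intros n Hn.
  assert (HnM : M0^3 < INR n) by (apply le_INR in Hn; lra).
  assert (H8 : 8 <= M0^3) by (replace 8 with (2^3) by ring; apply pow_incr; lra).
  assert (Hn4 : (4 <= n)%nat).
  { destruct (le_lt_dec 4 n) as [h|h]; auto. exfalso. apply lt_INR in h. simpl in h. lra. }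
  assert (Hnpos : 0 < INR n) by lra.
  set (T := Rpower (INR n) (1/3)).
  assert (HT0 : 0 < T) by (unfold T, Rpower; apply exp_pos).
  assert (HT3 : T^3 = INR n) by (unfold T; apply Rpower_cube; auto).
  assert (HTM : M0 < T).
  { destruct (Rlt_dec M0 T) as [h|h]; auto. exfalso. assert (T^3 <= M0^3) by (apply pow_incr; lra). lra. }
  assert (HR : Rpower (INR n) (4/3) = T^4) by (unfold T; apply Rpower_43; auto).
  assert (HT4 : 0 < T^4) by (apply pow_lt; auto).
  set (N := length (stars n)).
  assert (HN6 := N_real n Hn4). fold N in HN6.
  assert (HNup : INR N <= (T^3)^4 / 6) by (rewrite HT3; nra).
  assert (HNlo : (T^3)^4 - 6 * (T^3)^3 <= 6 * INR N) by (rewrite HT3; nra).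
  assert (Hp0 : prob_realizable n 0 = 1).
  { rewrite prob_mu, mu_zero. destruct (excluded_middle_informative (realizable_R1 n [])) as [|h]; auto.
    exfalso; apply h, real_nil. }
  assert (Hne : exists x, pstar_set n x) by (exists 0; split; lra).
  assert (Hbd : bound (pstar_set n)) by (exists 1; intros x [h _]; lra).
  destruct (completeness (pstar_set n) Hbd Hne) as [s Hs].
  assert (Hs0 : 0 <= s) by (apply (proj1 Hs); split; lra).
  exists s. split; auto. rewrite HR. split.
  -
    destruct (Rle_dec a 0) as [ha|ha].
    + fold a. assert (a / T^4 <= 0) by (unfold Rdiv; pose proof (Rinv_0_lt_compat _ HT4); nra). lra.
    + fold a. apply Rnot_le_lt in ha.
      assert (Ha3 : a^3 / 6 < ln 2).
      { assert (a^3 < c^3) by (apply cube_lt; unfold a in *; lra). lra. }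
      set (p := a / T^4).
      assert (HpT : p <= a / T) by (unfold p; apply div_pow_le; lia || lra).
      assert (HaT : a / T < 1).
      { apply (Rmult_lt_reg_r T); auto. unfold Rdiv. rewrite Rmult_assoc, Rinv_l by lra.
        pose proof (Rabs_pos (Mhi b)); pose proof (Rabs_pos (Mlo a)). pose proof (Rle_abs a). unfold M0 in HTM. lra. }
      assert (Hpp : 0 <= p) by (unfold p; apply Rmult_le_pos; [lra| left; apply Rinv_0_lt_compat; auto]).
      apply (proj1 Hs). split; [lra|].
      rewrite prob_mu. eapply Rlt_le_trans; [|apply lower_chain; lra].
      rewrite !pow_INR, <- HT3.
      assert (HML : Mlo a < T) by (pose proof (Rabs_pos (Mhi b)); pose proof (Rle_abs (Mlo a)); pose proof (Rabs_pos a); unfold M0 in HTM; lra).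
      pose proof (lower_num a T N ha Ha3 ltac:(lra) HML HNup) as HL. fold p in HL.
      assert (Hx : 0 <= p^3 < 1).
      { split; [apply pow_le; auto|]. assert (p < 1) by lra. assert (p^2 <= 1) by nra. nra. }
      pose proof (pow_lower (p^3) N Hx).
      set (B := 1 - (T ^ 3) ^ 3 * p ^ 3 - (T ^ 3) ^ 4 * p ^ 4 - (T ^ 3) ^ 5 * p ^ 4) in *.
      destruct (Rle_dec 0 B) as [hB|hB].
      * eapply Rlt_le_trans; [apply HL|]. apply Rmult_le_compat_r; auto.
      * exfalso. pose proof (exp_pos (- (INR N * (p ^ 3 / (1 - p ^ 3))))). nra.
  -
    fold b. apply (proj2 Hs). intros p [Hp1 Hp2].
    destruct (Rle_dec p (b / T^4)) as [h|h]; auto. exfalso. apply Rnot_le_lt in h.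
    set (q := b / T^4) in *.
    assert (Hq : 0 <= q) by (unfold q; apply Rmult_le_pos; [lra| left; apply Rinv_0_lt_compat; auto]).
    rewrite prob_mu in Hp2.
    assert (H1 : mu p (pairs n) (realizable_R1 n) <= mu q (pairs n) (realizable_R1 n))
      by (apply mu_mono_p; auto; try lra; apply real_decr).
    assert (H2 := upper_chain n q ltac:(lra)).
    assert (H3 := jsum_le n q (stars n) ltac:(lra) (stars_nodup n) (incl_refl _)). fold N in H3.
    assert (HMH : Mhi b <= T) by (pose proof (Rle_abs (Mhi b)); pose proof (Rabs_pos (Mlo a)); pose proof (Rabs_pos a); unfold M0 in HTM; lra).
    pose proof (upper_num b T N Hb Hb3 HMH HNlo HNup) as HU. fold q in HU.
    unfold Dn in H3. rewrite <- HT3 in H3.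
    assert (exp (jsum q (pairs n) Fstar (stars n)) <= exp (- ln 2)) by (apply exp_mono; lra).
    rewrite exp_Ropp, exp_ln in H by lra. lra.
Qed.
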